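(* Let $n\ge1$, let $\mathcal{I}\in\{\mathcal{N},\mathcal{M}\}$ and let $\kappa$ be a cardinal. If $\mathrm{cov}(\mathcal{I})=\mathrm{cof}(\mathcal{I})=\kappa$, then there exists a linear subspace $H$ of $\mathbb{R}^n$, considered as a vector space over $\mathbb{Q}$, which is a $\kappa$-Luzin set for $\mathcal{I}$.
   Context: $\mathcal{N}$ is the $\sigma$-ideal of Lebesgue null subsets of $\mathbb{R}^n$, and $\mathcal{M}$ is the $\sigma$-ideal of meager subsets of $\mathbb{R}^n$. $\mathrm{cov}(\mathcal{I})=\min\{|\mathcal{F}|:\mathcal{F}\subseteq\mathcal{I},\ \bigcup\mathcal{F}=\mathbb{R}^n\}$. $\mathrm{cof}(\mathcal{I})=\min\{|\mathcal{F}|:\mathcal{F}\subseteq\mathcal{I},\ \forall A\in\mathcal{I}\ \exists B\in\mathcal{F}\ A\subseteq B\}$. A $\kappa$-Luzin set for $\mathcal{I}$ is a set $L\subseteq\mathbb{R}^n$ with $|L|\ge\kappa$ such that $|L\cap B|<\kappa$ for every $B\in\mathcal{I}$. *)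

(* Defs.v *)
From Stdlib Require Import Reals QArith Qreals.
Open Scope R_scope.

(* Points of R^n are represented as functions nat -> R vanishing at all
   coordinates i >= n.  A "set" is a predicate on nat -> R. *)
Definition Rn (n : nat) (x : nat -> R) : Prop := forall i, (n <= i)%nat -> x i = 0.

Definition pset := (nat -> R) -> Prop.

Fixpoint prodR (n : nat) (f : nat -> R) : R :=
  match n with O => 1 | S m => prodR m f * f m end.
Fixpoint sumR (n : nat) (f : nat -> R) : R :=
  match n with O => 0 | S m => sumR m f + f m end.

Definition in_box (n : nat) (a b x : nat -> R) : Prop :=
  forall i, (i < n)%nat -> a i <= x i <= b i.
Definition box_vol (n : nat) (a b : nat -> R) : R := prodR n (fun i => b i - a i).

Definition null_set (n : nat) (A : pset) : Prop :=
  (forall x, A x -> Rn n x) /\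
  forall eps, eps > 0 ->
    exists a b : nat -> nat -> R,
      (forall k i, a k i <= b k i) /\
      (forall x, A x -> exists k, in_box n (a k) (b k) x) /\
      (forall N, sumR N (fun k => box_vol n (a k) (b k)) <= eps).

Definition dist2 (n : nat) (x y : nat -> R) : R := sumR n (fun i => (x i - y i) ^ 2).
Definition ball (n : nat) (x : nat -> R) (r : R) (y : nat -> R) : Prop :=
  Rn n y /\ dist2 n x y < r ^ 2.
Definition closure (n : nat) (F : pset) (x : nat -> R) : Prop :=
  Rn n x /\ forall r, r > 0 -> exists y, F y /\ dist2 n x y < r ^ 2.
Definition nowhere_dense (n : nat) (F : pset) : Prop :=
  (forall x, F x -> Rn n x) /\
  ~ (exists x r, Rn n x /\ r > 0 /\ forall y, ball n x r y -> closure n F y).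
Definition meager_set (n : nat) (A : pset) : Prop :=
  (forall x, A x -> Rn n x) /\
  exists F : nat -> pset, (forall k, nowhere_dense n (F k)) /\
    (forall x, A x -> exists k, F k x).

Inductive ideal_kind := NullIdeal | MeagerIdeal.
Definition in_ideal (I : ideal_kind) (n : nat) (A : pset) : Prop :=
  match I with NullIdeal => null_set n A | MeagerIdeal => meager_set n A end.

Definition le_card (X Y : Type) : Prop :=
  exists f : X -> Y, forall u v, f u = f v -> u = v.
Definition lt_card (X Y : Type) : Prop := le_card X Y /\ ~ le_card Y X.

(* cov(I) = |K| : some K-indexed subfamily of I covers R^n, and every
   covering subfamily of I (indexed by any T) has size at least |K|. *)
Definition cov_is (I : ideal_kind) (n : nat) (K : Type) : Prop :=
  (exists F : K -> pset, (forall k, in_ideal I n (F k)) /\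
      (forall x, Rn n x -> exists k, F k x)) /\
  (forall (T : Type) (F : T -> pset), (forall t, in_ideal I n (F t)) ->
      (forall x, Rn n x -> exists t, F t x) -> le_card K T).

Definition cofinal (I : ideal_kind) (n : nat) {T : Type} (F : T -> pset) : Prop :=
  (forall t, in_ideal I n (F t)) /\
  (forall A, in_ideal I n A -> exists t, forall x, A x -> F t x).
Definition cof_is (I : ideal_kind) (n : nat) (K : Type) : Prop :=
  (exists F : K -> pset, cofinal I n F) /\
  (forall (T : Type) (F : T -> pset), cofinal I n F -> le_card K T).

Definition Q_subspace (n : nat) (H : pset) : Prop :=
  (forall x, H x -> Rn n x) /\
  H (fun _ => 0) /\
  (forall x y, H x -> H y -> H (fun i => x i + y i)) /\
  (forall (q : Q) x, H x -> H (fun i => Q2R q * x i)).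

Definition Luzin (I : ideal_kind) (n : nat) (K : Type) (L : pset) : Prop :=
  (forall x, L x -> Rn n x) /\
  le_card K {x | L x} /\
  (forall B, in_ideal I n B -> lt_card {x | L x /\ B x} K).

(* Main.v *)
Require Import Defs.
From Stdlib Require Import Reals QArith Qreals Lra Lia.
From Stdlib Require Import Classical ClassicalEpsilon FunctionalExtensionality PropExtensionality.
From Stdlib Require Import Arith List Cantor.
Open Scope R_scope.

Lemma sumR_ext m f g : (forall i, (i < m)%nat -> f i = g i) -> sumR m f = sumR m g.
Proof. induction m; simpl; intros h; auto. rewrite IHm, h; auto. Qed.

Lemma sumR_nonneg m f : (forall i, (i < m)%nat -> 0 <= f i) -> 0 <= sumR m f.
Proof. induction m; simpl; intros h; [lra|]. pose proof (h m ltac:(lia)). pose proof (IHm ltac:(intros; apply h; lia)). lra. Qed.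

Lemma sumR_le m f g : (forall i, (i < m)%nat -> f i <= g i) -> sumR m f <= sumR m g.
Proof. induction m; simpl; intros h; [lra|]. pose proof (h m ltac:(lia)). pose proof (IHm ltac:(intros; apply h; lia)). lra. Qed.

Lemma sumR_term m f i : (forall j, (j < m)%nat -> 0 <= f j) -> (i < m)%nat -> f i <= sumR m f.
Proof.
  induction m; simpl; intros h hi; [lia|].
  assert (0 <= sumR m f) by (apply sumR_nonneg; intros; apply h; lia).
  destruct (Nat.eq_dec i m) as [->|ne]; [lra|].
  pose proof (IHm ltac:(intros; apply h; lia) ltac:(lia)). pose proof (h m ltac:(lia)). lra.
Qed.

Lemma sumR_scal m c f : sumR m (fun i => c * f i) = c * sumR m f.
Proof. induction m; simpl; [ring|rewrite IHm; ring]. Qed.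

Lemma sumR_plus m f g : sumR m (fun i => f i + g i) = sumR m f + sumR m g.
Proof. induction m; simpl; [ring|rewrite IHm; ring]. Qed.

Lemma sumR_mono m M f : (forall i, 0 <= f i) -> (m <= M)%nat -> sumR m f <= sumR M f.
Proof. intros h hm. induction hm; simpl; [lra|]. pose proof (h m0). lra. Qed.

Lemma sumR_const0 m f : (forall i, (i < m)%nat -> f i = 0) -> sumR m f = 0.
Proof. intros h. rewrite (sumR_ext m f (fun _ => 0)); auto. induction m; simpl; auto. rewrite IHm; [ring|intros; auto]. Qed.

Lemma prodR_scal m c f : prodR m (fun i => c * f i) = c ^ m * prodR m f.
Proof. induction m; simpl; [ring|rewrite IHm; ring]. Qed.

Lemma prodR_ext m f g : (forall i, (i < m)%nat -> f i = g i) -> prodR m f = prodR m g.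
Proof. induction m; simpl; intros h; auto. rewrite IHm, h; auto. Qed.

Lemma prodR_nonneg m f : (forall i, (i < m)%nat -> 0 <= f i) -> 0 <= prodR m f.
Proof. induction m; simpl; intros h; [lra|]. apply Rmult_le_pos; [apply IHm; intros; apply h; lia|apply h; lia]. Qed.

Lemma prodR_mono m f g : (forall i, (i < m)%nat -> 0 <= f i <= g i) -> prodR m f <= prodR m g.
Proof.
  induction m; simpl; intros h; [lra|].
  assert (0 <= prodR m f) by (apply prodR_nonneg; intros; apply h; lia).
  pose proof (IHm ltac:(intros; apply h; lia)). pose proof (h m ltac:(lia)).
  apply Rmult_le_compat; lra.
Qed.

Lemma prodR_zero m f : (1 <= m)%nat -> f 0%nat = 0 -> prodR m f = 0.
Proof.
  intros h1 h2. induction m as [|m IH]; [lia|]. simpl. destruct m as [|m'].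
  - simpl; rewrite h2; ring.
  - rewrite IH; [ring|lia].
Qed.

Lemma sq_nonneg a : 0 <= a ^ 2.
Proof. simpl; nra. Qed.

Lemma dist2_nonneg n x y : 0 <= dist2 n x y.
Proof. apply sumR_nonneg; intros; apply sq_nonneg. Qed.

Lemma dist2_coord n x y i : (i < n)%nat -> (x i - y i) ^ 2 <= dist2 n x y.
Proof. intros hi. apply (sumR_term n (fun i => (x i - y i) ^ 2)); auto. intros; apply sq_nonneg. Qed.

Lemma dist2_refl n x : dist2 n x x = 0.
Proof. apply sumR_const0. intros; simpl; ring. Qed.

Lemma dist2_sym n x y : dist2 n x y = dist2 n y x.
Proof. apply sumR_ext. intros; simpl; ring. Qed.

Lemma dist2_aff n r h a b : dist2 n (fun i => r * a i + h i) (fun i => r * b i + h i) = r ^ 2 * dist2 n a b.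
Proof. unfold dist2. rewrite <- sumR_scal. apply sumR_ext. intros; simpl; ring. Qed.

Lemma dist2_zero_eq n x y : Rn n x -> Rn n y -> dist2 n x y = 0 -> x = y.
Proof.
  intros hx hy h. apply functional_extensionality; intros i.
  destruct (le_lt_dec n i) as [hi|hi].
  - rewrite hx, hy; auto.
  - pose proof (dist2_coord n x y i hi). pose proof (sq_nonneg (x i - y i)). simpl in *. nra.
Qed.

Lemma sq_lt_abs a b : 0 < b -> a ^ 2 < b ^ 2 -> Rabs a < b.
Proof. intros hb h. simpl in h. apply Rabs_def1; nra. Qed.
Lemma sq_le_abs a b : 0 <= b -> a ^ 2 <= b ^ 2 -> Rabs a <= b.
Proof. intros hb h. simpl in h. destruct (Rle_lt_dec (Rabs a) b); auto. unfold Rabs in *. destruct (Rcase_abs a); nra. Qed.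

Lemma dist2_bound n x y b : 0 <= b -> (forall i, (i < n)%nat -> Rabs (x i - y i) <= b) -> dist2 n x y <= INR n * b ^ 2.
Proof.
  intros hb h. unfold dist2. apply Rle_trans with (sumR n (fun _ => b ^ 2)).
  - apply sumR_le. intros i hi. pose proof (h i hi). pose proof (Rabs_pos (x i - y i)).
    rewrite <- pow2_abs. apply pow_incr. lra.
  - clear h. induction n as [|m IH]; [simpl; lra|]. rewrite S_INR. simpl sumR. simpl in IH. nra.
Qed.

Lemma sumR_single m f : (1 <= m)%nat -> (forall i, i <> 0%nat -> f i = 0) -> sumR m f = f 0%nat.
Proof.
  intros h1 h2. induction m as [|m IH]; [lia|]. simpl. destruct m as [|m'].
  - simpl; lra.
  - rewrite IH, (h2 (S m')); [lra|lia|lia].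
Qed.

Lemma closure_single n v y : closure n (fun z => z = v) y -> Rn n v -> y = v.
Proof.
  intros [ry h] hv. apply (dist2_zero_eq n); auto.
  pose proof (dist2_nonneg n y v). destruct (Req_dec (dist2 n y v) 0) as [e|ne]; auto.
  assert (hd : 0 < dist2 n y v) by lra.
  destruct (h (sqrt (dist2 n y v)) (sqrt_lt_R0 _ hd)) as [z [-> hz]].
  rewrite pow2_sqrt in hz; lra.
Qed.

Lemma nd_single n v : (1 <= n)%nat -> Rn n v -> nowhere_dense n (fun z => z = v).
Proof.
  intros hn hv. split; [intros x ->; auto|]. intros [x [r [hx [hr H]]]].
  set (x' := fun i => if Nat.eqb i 0 then x i + r / 2 else x i).
  assert (e1 : x = v).
  { apply (closure_single n); auto. apply H. split; auto. rewrite dist2_refl. simpl; nra. }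
  assert (e2 : x' = v).
  { apply (closure_single n); auto. apply H. split.
    - intros i hi. unfold x'. destruct (Nat.eqb_spec i 0); [lia|]. apply hx; auto.
    - unfold dist2. rewrite (sumR_single n); auto.
      + unfold x'; simpl. nra.
      + intros i hi. unfold x'. destruct (Nat.eqb_spec i 0); [lia|]. simpl; ring. }
  assert (x 0%nat = x' 0%nat) by (rewrite e1, e2; auto).
  unfold x' in H0; simpl in H0. lra.
Qed.

Lemma meager_sub n A B : (forall x, A x -> B x) -> meager_set n B -> meager_set n A.
Proof. intros h [hB [F [hF hc]]]. split; [auto|]. exists F; split; auto. Qed.

Lemma meager_single n v : (1 <= n)%nat -> Rn n v -> meager_set n (fun y => y = v).
Proof.
  intros hn hv. split; [intros x ->; auto|]. exists (fun _ => fun z => z = v). split.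
  - intros; apply nd_single; auto.
  - intros x hx; exists 0%nat; auto.
Qed.

Lemma meager_cu n (F : nat -> pset) : (forall k, meager_set n (F k)) -> meager_set n (fun y => exists k, F k y).
Proof.
  intros H. split; [intros x [k hk]; apply (proj1 (H k)); auto|].
  set (G := fun k => proj1_sig (constructive_indefinite_description _ (proj2 (H k)))).
  assert (HG : forall k, (forall j, nowhere_dense n (G k j)) /\ forall x, F k x -> exists j, G k j x).
  { intros k. unfold G. destruct (constructive_indefinite_description _ (proj2 (H k))); simpl; auto. }
  exists (fun m => G (fst (Cantor.of_nat m)) (snd (Cantor.of_nat m))). split.
  - intros m; apply HG.
  - intros x [k hk]. destruct (proj2 (HG k) x hk) as [j hj]. exists (Cantor.to_nat (k,j)).
    rewrite Cantor.cancel_of_to; auto.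
Qed.

Lemma nd_aff n F r h : r <> 0 -> nowhere_dense n F ->
  nowhere_dense n (fun y => Rn n y /\ F (fun i => r * y i + h i)).
Proof.
  intros hr [hF hnd]. split; [tauto|]. intros [x [s [hx [hs Hb]]]].
  destruct (classic (exists y0, Rn n y0 /\ F (fun i => r * y0 i + h i))) as [[y0 [hy0 hFy0]]|no].
  2:{ destruct (Hb x) as [_ hc]. { split; auto. rewrite dist2_refl. simpl; nra. }
      destruct (hc s hs) as [z [hz _]]. apply no; eauto. }
  assert (hh : Rn n h).
  { intros i hi. pose proof (hF _ hFy0 i hi) as e. simpl in e. rewrite hy0 in e; auto. lra. }
  apply hnd. exists (fun i => r * x i + h i), (Rabs r * s). split; [|split].
  - intros i hi. rewrite hx, hh; auto; ring.
  - apply Rmult_lt_0_compat; auto. apply Rabs_pos_lt; auto.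
  - intros z [hz hd].
    set (w := fun i => (z i - h i) / r).
    assert (zw : z = fun i => r * w i + h i).
    { apply functional_extensionality; intros i; unfold w; field; auto. }
    assert (hw : Rn n w) by (intros i hi; unfold w; rewrite hz, hh; auto; field; auto).
    assert (r2 : 0 < r ^ 2) by (simpl; nra).
    assert (hxw : dist2 n x w < s ^ 2).
    { rewrite zw, dist2_aff in hd. rewrite Rpow_mult_distr, pow2_abs in hd.
      apply (Rmult_lt_reg_l (r ^ 2)); auto. }
    destruct (Hb w (conj hw hxw)) as [_ hc].
    split; auto. intros e he.
    assert (hre : e / Rabs r > 0) by (apply Rdiv_lt_0_compat; auto; apply Rabs_pos_lt; auto).
    destruct (hc _ hre) as [u [[hu hFu] hdu]].
    exists (fun i => r * u i + h i). split; auto.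
    rewrite zw, dist2_aff.
    replace (e ^ 2) with (r ^ 2 * (e / Rabs r) ^ 2).
    + apply Rmult_lt_compat_l; auto.
    + rewrite <- (pow2_abs r). field. apply Rabs_no_R0; auto.
Qed.

Lemma meager_aff n B h r : meager_set n B -> r <> 0 ->
  meager_set n (fun y => Rn n y /\ B (fun i => r * y i + h i)).
Proof.
  intros [hB [F [hF hc]]] hr. split; [tauto|].
  exists (fun k y => Rn n y /\ F k (fun i => r * y i + h i)). split.
  - intros k; apply nd_aff; auto.
  - intros y [hy hBy]. destruct (hc _ hBy) as [k hk]. exists k; auto.
Qed.

Lemma nd_escape n F x r : nowhere_dense n F -> Rn n x -> r > 0 ->
  exists p : (nat -> R) * R, Rn n (fst p) /\ dist2 n x (fst p) < r ^ 2 /\ snd p > 0 /\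
    forall z, F z -> snd p ^ 2 <= dist2 n (fst p) z.
Proof.
  intros [_ hnd] hx hr. apply NNPP; intro no. apply hnd. exists x, r. split; auto. split; auto.
  intros y [hy hd]. split; auto. intros s hs. apply NNPP; intro nz. apply no.
  exists (y, s). simpl. split; auto. split; auto. split; auto.
  intros z hz. destruct (Rle_lt_dec (s ^ 2) (dist2 n y z)); auto. exfalso; apply nz; eauto.
Qed.

Lemma lim_bound u l j a b : Un_cv u l -> (forall m, (m >= j)%nat -> Rabs (u m - a) <= b) -> Rabs (l - a) <= b.
Proof.
  intros hu hb. destruct (Rle_lt_dec (Rabs (l - a)) b) as [h|h]; auto. exfalso.
  destruct (hu (Rabs (l - a) - b)) as [N hN]; [lra|].
  pose proof (hN (max N j) ltac:(lia)) as h1. pose proof (hb (max N j) ltac:(lia)) as h2.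
  unfold R_dist in h1.
  pose proof (Rabs_triang (l - u (max N j)) (u (max N j) - a)) as t.
  replace (l - u (max N j) + (u (max N j) - a)) with (l - a) in t by ring.
  rewrite Rabs_minus_sym in h1. lra.
Qed.

Lemma baire n (F : nat -> pset) : (forall k, nowhere_dense n (F k)) ->
  exists c, Rn n c /\ forall k, ~ F k c.
Proof.
  intros hF.
  set (inh := inhabits ((fun _ : nat => 0), 0)).
  set (nxt := fun k (st : (nat -> R) * R) => epsilon inh (fun p : (nat -> R) * R =>
        Rn n (fst st) -> snd st > 0 -> Rn n (fst p) /\ dist2 n (fst st) (fst p) < snd st ^ 2 /\ snd p > 0 /\
        forall z, F k z -> snd p ^ 2 <= dist2 n (fst p) z)).
  assert (nxt_spec : forall k st, Rn n (fst st) -> snd st > 0 ->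
        Rn n (fst (nxt k st)) /\ dist2 n (fst st) (fst (nxt k st)) < snd st ^ 2 /\ snd (nxt k st) > 0 /\
        forall z, F k z -> snd (nxt k st) ^ 2 <= dist2 n (fst (nxt k st)) z).
  { intros k st h1 h2. unfold nxt. apply (epsilon_spec inh (fun p : (nat -> R) * R =>
        Rn n (fst st) -> snd st > 0 -> Rn n (fst p) /\ dist2 n (fst st) (fst p) < snd st ^ 2 /\ snd p > 0 /\
        forall z, F k z -> snd p ^ 2 <= dist2 n (fst p) z)); auto.
    destruct (nd_escape n (F k) (fst st) (snd st) (hF k) h1 h2) as [p hp]. exists p; auto. }
  set (M := 2 * (INR n + 1)).
  assert (hM : 2 <= M) by (unfold M; pose proof (pos_INR n); lra).
  set (st := fix st k := match k with O => ((fun _ : nat => 0), 1)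
                 | S k => (fst (nxt k (st k)), Rmin (snd (st k)) (snd (nxt k (st k))) / M) end).
  assert (inv : forall k, Rn n (fst (st k)) /\ snd (st k) > 0).
  { induction k as [|k [h1 h2]]; simpl.
    - split; [intros i _; reflexivity|simpl; lra].
    - destruct (nxt_spec k (st k) h1 h2) as [a [b [c d]]]. split; auto.
      apply Rdiv_lt_0_compat; [|lra]. apply Rmin_pos; auto. }
  set (C := fun k => fst (st k)). set (r := fun k => snd (st k)).
  assert (rpos : forall k, r k > 0) by (intros; apply inv).
  assert (rS : forall k, r (S k) <= r k / 2).
  { intros k. unfold r; simpl. pose proof (Rmin_l (snd (st k)) (snd (nxt k (st k)))).
    pose proof (inv k). pose proof (Rmin_pos (snd (st k)) (snd (nxt k (st k)))).
    apply Rmult_le_compat_l with (r := /2) in H; [|lra].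
    unfold Rdiv. apply Rle_trans with (Rmin (snd (st k)) (snd (nxt k (st k))) * / 2).
    - apply Rmult_le_compat_l. { pose proof (nxt_spec k (st k) (proj1 (inv k)) (proj2 (inv k))). apply Rlt_le, Rmin_pos; tauto. }
      apply Rinv_le_contravar; lra.
    - lra. }
  assert (rs : forall k, r (S k) <= snd (nxt k (st k)) / M).
  { intros k. unfold r; simpl. unfold Rdiv. apply Rmult_le_compat_r; [apply Rlt_le, Rinv_0_lt_compat; lra|apply Rmin_r]. }
  assert (step : forall k i, Rabs (C (S k) i - C k i) <= r k).
  { intros k i. destruct (inv k) as [h1 h2]. destruct (nxt_spec k (st k) h1 h2) as [a [b _]].
    change (C (S k)) with (fst (nxt k (st k))). unfold C, r. destruct (le_lt_dec n i) as [hi|hi].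
    - rewrite a, h1; auto. rewrite Rminus_0_r, Rabs_R0; lra.
    - apply Rlt_le, sq_lt_abs; auto.
      pose proof (dist2_coord n (fst (st k)) (fst (nxt k (st k))) i hi).
      replace ((fst (nxt k (st k)) i - fst (st k) i) ^ 2) with ((fst (st k) i - fst (nxt k (st k)) i) ^ 2) by ring. lra. }
  assert (D : forall j m i, (j <= m)%nat -> Rabs (C m i - C j i) <= 2 * (r j - r m)).
  { intros j m i hm. induction hm.
    - unfold Rminus at 1. rewrite Rplus_opp_r, Rabs_R0. lra.
    - pose proof (Rabs_triang (C (S m) i - C m i) (C m i - C j i)) as t.
      replace (C (S m) i - C m i + (C m i - C j i)) with (C (S m) i - C j i) in t by ring.
      pose proof (step m i). pose proof (rS m). lra. }
  assert (rle : forall k, r k <= (/2) ^ k).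
  { induction k; simpl. { unfold r; simpl; lra. } pose proof (rS k). lra. }
  assert (cau : forall i, Cauchy_crit (fun k => C k i)).
  { intros i eps he. destruct (pow_lt_1_zero (/2) ltac:(rewrite Rabs_right; lra) (eps / 4) ltac:(lra)) as [N hN].
    exists N. intros p q hp hq. unfold R_dist.
    pose proof (D N p i hp). pose proof (D N q i hq). pose proof (rpos p). pose proof (rpos q).
    pose proof (hN N (le_n N)). pose proof (rle N). rewrite Rabs_right in H3; [|apply Rle_ge, pow_le; lra].
    pose proof (Rabs_triang (C p i - C N i) (C N i - C q i)) as t.
    replace (C p i - C N i + (C N i - C q i)) with (C p i - C q i) in t by ring.
    rewrite Rabs_minus_sym in H0. lra. }
  set (c := fun i => proj1_sig (R_complete _ (cau i))).
  assert (hc : forall i, Un_cv (fun k => C k i) (c i)) by (intros i; unfold c; destruct (R_complete _ (cau i)); auto).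
  assert (cb : forall j i, Rabs (c i - C j i) <= 2 * r j).
  { intros j i. apply (lim_bound (fun k => C k i) _ j); auto. intros m hm. pose proof (D j m i hm). pose proof (rpos m). lra. }
  exists c. split.
  - intros i hi. pose proof (lim_bound (fun k => C k i) (c i) 0 0 0 (hc i)) as h.
    assert (Rabs (c i - 0) <= 0).
    { apply h. intros m _. unfold C. rewrite (proj1 (inv m)); auto. rewrite Rminus_0_r, Rabs_R0; lra. }
    rewrite Rminus_0_r in H. pose proof (Rabs_pos (c i)). destruct (Rcase_abs (c i)); unfold Rabs in H; destruct (Rcase_abs (c i)); lra.
  - intros k hk. destruct (inv k) as [h1 h2]. destruct (nxt_spec k (st k) h1 h2) as [a [b [s0 d]]].
    pose proof (d c hk) as hd. set (s := snd (nxt k (st k))) in *.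
    assert (hb : dist2 n (fst (nxt k (st k))) c <= INR n * (2 * r (S k)) ^ 2).
    { apply dist2_bound. pose proof (rpos (S k)); lra. intros i hi. rewrite Rabs_minus_sym. apply (cb (S k) i). }
    pose proof (rs k) as hr. fold s in hr. pose proof (rpos (S k)) as hp.
    assert (2 * r (S k) <= s / (INR n + 1)) by (unfold M in hr; unfold Rdiv in *; rewrite Rinv_mult in hr; lra).
    assert (hn : 0 <= INR n) by apply pos_INR.
    assert ((2 * r (S k)) ^ 2 <= (s / (INR n + 1)) ^ 2) by (apply pow_incr; lra).
    assert (INR n * (s / (INR n + 1)) ^ 2 < s ^ 2).
    { replace (INR n * (s / (INR n + 1)) ^ 2) with (s ^ 2 * (INR n / (INR n + 1) ^ 2)) by (field; lra).
      assert (INR n / (INR n + 1) ^ 2 < 1).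
      { apply (Rmult_lt_reg_r ((INR n + 1) ^ 2)); [simpl; nra|]. unfold Rdiv. rewrite Rmult_assoc, Rinv_l; [simpl; nra|simpl; nra]. }
      assert (0 < s ^ 2) by (simpl; nra). nra. }
    nra.
Qed.

Lemma not_meager n : ~ meager_set n (Rn n).
Proof.
  intros [_ [F [hF hc]]]. destruct (baire n F hF) as [c [hc1 hc2]]. destruct (hc c hc1) as [k hk]. eapply hc2; eauto.
Qed.

Lemma null_sub n A B : (forall x, A x -> B x) -> null_set n B -> null_set n A.
Proof.
  intros h [hB hn]. split; [auto|]. intros eps he. destruct (hn eps he) as [a [b [h1 [h2 h3]]]].
  exists a, b. split; auto.
Qed.

Lemma null_single n v : (1 <= n)%nat -> Rn n v -> null_set n (fun y => y = v).
Proof.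
  intros hn hv. split; [intros x ->; auto|]. intros eps he. exists (fun _ => v), (fun _ => v). split; [|split].
  - intros; lra.
  - intros x ->. exists 0%nat. intros i _; lra.
  - intros N. rewrite sumR_const0; [lra|]. intros i _. unfold box_vol. apply prodR_zero; auto. ring.
Qed.

Definition lsum {A} (f : A -> R) (l : list A) : R := fold_right (fun x acc => f x + acc) 0 l.

Lemma lsum_app {A} f (l1 l2 : list A) : lsum f (l1 ++ l2) = lsum f l1 + lsum f l2.
Proof. induction l1; simpl; [lra|rewrite IHl1; lra]. Qed.

Lemma lsum_nonneg {A} (f : A -> R) l : (forall x, 0 <= f x) -> 0 <= lsum f l.
Proof. intros h; induction l; simpl; [lra|pose proof (h a); lra]. Qed.

Lemma lsum_remove_le {A} (dec : forall x y : A, {x = y} + {x <> y}) (f : A -> R) a l : (forall x, 0 <= f x) ->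
  lsum f (remove dec a l) <= lsum f l.
Proof.
  intros h; induction l as [|x l IH]; simpl; [lra|].
  destruct (dec a x); simpl; pose proof (h x); lra.
Qed.

Lemma lsum_remove {A} (dec : forall x y : A, {x = y} + {x <> y}) (f : A -> R) a l : (forall x, 0 <= f x) -> In a l ->
  f a + lsum f (remove dec a l) <= lsum f l.
Proof.
  intros h; induction l as [|x l IH]; simpl; intros hin; [contradiction|].
  destruct (dec a x) as [e|ne].
  - subst. pose proof (lsum_remove_le dec f x l h). lra.
  - destruct hin as [e|hin]; [congruence|]. simpl. pose proof (IH hin). lra.
Qed.

Lemma lsum_incl {A} (dec : forall x y : A, {x = y} + {x <> y}) (f : A -> R) l1 l2 : (forall x, 0 <= f x) -> NoDup l1 -> incl l1 l2 ->
  lsum f l1 <= lsum f l2.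
Proof.
  intros h nd. revert l2. induction nd as [|a l1 na nd IH]; intros l2 hi; simpl.
  - apply lsum_nonneg; auto.
  - assert (hl : incl l1 (remove dec a l2)).
    { intros y hy. apply in_in_remove. intro e; subst; contradiction. apply hi; simpl; auto. }
    pose proof (IH _ hl). pose proof (lsum_remove dec f a l2 h (hi a (or_introl eq_refl))). lra.
Qed.

Lemma sumR_lsum N g : sumR N g = lsum g (seq 0 N).
Proof. induction N; [reflexivity|]. rewrite seq_S, lsum_app. change (sumR (S N) g) with (sumR N g + g N). rewrite IHN. simpl. lra. Qed.

Lemma lsum_map {A B} (f : B -> R) (g : A -> B) l : lsum f (map g l) = lsum (fun x => f (g x)) l.
Proof. induction l; simpl; auto. rewrite IHl; auto. Qed.

Lemma lsum_prod {A B} (v : A * B -> R) l1 l2 :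
  lsum v (list_prod l1 l2) = lsum (fun k => lsum (fun j => v (k,j)) l2) l1.
Proof. induction l1; simpl; auto. rewrite lsum_app, IHl1, lsum_map; auto. Qed.

Lemma pair_dec : forall x y : nat * nat, {x = y} + {x <> y}.
Proof. decide equality; apply Nat.eq_dec. Qed.

Lemma reindex (v : nat * nat -> R) (c : nat -> R) eps : (forall p, 0 <= v p) ->
  (forall k N, sumR N (fun j => v (k,j)) <= c k) -> (forall M, sumR M c <= eps) ->
  forall N, sumR N (fun m => v (Cantor.of_nat m)) <= eps.
Proof.
  intros hv hc hM N. rewrite sumR_lsum.
  rewrite <- (lsum_map v Cantor.of_nat).
  apply Rle_trans with (lsum v (list_prod (seq 0 N) (seq 0 N))).
  - apply lsum_incl; auto. apply pair_dec.
    + apply NoDup_map_NoDup_ForallPairs; [intros x y _ _; apply Cantor.of_nat_inj|apply seq_NoDup].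
    + intros [k j] hin. apply in_map_iff in hin as [m [e hm]]. apply in_seq in hm.
      pose proof (Cantor.to_nat_non_decreasing k j). rewrite <- e, Cantor.cancel_to_of in H.
      apply in_prod; apply in_seq; lia.
  - rewrite lsum_prod. apply Rle_trans with (lsum c (seq 0 N)).
    + clear hM. assert (gen : forall L, lsum (fun k => lsum (fun j => v (k,j)) (seq 0 N)) L <= lsum c L).
      { induction L as [|a L IH]; simpl; [lra|]. pose proof (hc a N) as h. rewrite sumR_lsum in h. lra. }
      apply gen.
    + rewrite <- sumR_lsum; auto.
Qed.

Lemma geom M eps : sumR M (fun k => eps * (/ 2) ^ (S k)) = eps * (1 - (/2) ^ M).
Proof. induction M; [simpl; ring|]. change (sumR (S M) (fun k => eps * (/ 2) ^ (S k))) with (sumR M (fun k => eps * (/ 2) ^ (S k)) + eps * (/2) ^ (S M)). rewrite IHM. simpl. field. Qed.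

Lemma null_cu n (F : nat -> pset) : (forall k, null_set n (F k)) -> null_set n (fun y => exists k, F k y).
Proof.
  intros H. split; [intros x [k hk]; apply (proj1 (H k)); auto|]. intros eps he.
  assert (hex : forall k, exists ab : (nat -> nat -> R) * (nat -> nat -> R),
     (forall m i, fst ab m i <= snd ab m i) /\ (forall x, F k x -> exists m, in_box n (fst ab m) (snd ab m) x) /\
     (forall N, sumR N (fun m => box_vol n (fst ab m) (snd ab m)) <= eps * (/2) ^ (S k))).
  { intros k. assert (0 < eps * (/2) ^ (S k)) by (apply Rmult_lt_0_compat; auto; apply pow_lt; lra).
    destruct (proj2 (H k) _ H0) as [a [b hab]]. exists (a, b); auto. }
  set (ab := fun k => proj1_sig (constructive_indefinite_description _ (hex k))).
  assert (hab : forall k, (forall m i, fst (ab k) m i <= snd (ab k) m i) /\ (forall x, F k x -> exists m, in_box n (fst (ab k) m) (snd (ab k) m) x) /\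
     (forall N, sumR N (fun m => box_vol n (fst (ab k) m) (snd (ab k) m)) <= eps * (/2) ^ (S k))).
  { intros k; unfold ab; destruct (constructive_indefinite_description _ (hex k)); auto. }
  exists (fun m => fst (ab (fst (Cantor.of_nat m))) (snd (Cantor.of_nat m))),
         (fun m => snd (ab (fst (Cantor.of_nat m))) (snd (Cantor.of_nat m))).
  split; [|split].
  - intros m i. apply hab.
  - intros x [k hk]. destruct (proj1 (proj2 (hab k)) x hk) as [j hj]. exists (Cantor.to_nat (k,j)).
    rewrite Cantor.cancel_of_to; auto.
  - intros N. apply (reindex (fun p => box_vol n (fst (ab (fst p)) (snd p)) (snd (ab (fst p)) (snd p))) (fun k => eps * (/2) ^ (S k))).
    + intros [k j]. simpl. unfold box_vol. apply prodR_nonneg. intros i _. pose proof (proj1 (hab k) j i). lra.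
    + intros k N'. apply (hab k).
    + intros M. rewrite geom. assert (0 <= (/2) ^ M) by (apply pow_le; lra). nra.
Qed.

Lemma minmax_between u v y : (u <= y <= v) \/ (v <= y <= u) -> Rmin u v <= y <= Rmax u v.
Proof. unfold Rmin, Rmax; intros; destruct (Rle_dec u v); lra. Qed.

Lemma maxmin u v : Rmax u v - Rmin u v = Rabs (u - v).
Proof. unfold Rmin, Rmax, Rabs; destruct (Rle_dec u v); destruct (Rcase_abs (u - v)); lra. Qed.

Lemma null_aff n B h r : null_set n B -> r <> 0 ->
  null_set n (fun y => Rn n y /\ B (fun i => r * y i + h i)).
Proof.
  intros [hB hn] hr. split; [tauto|]. intros eps he.
  assert (hra : 0 < Rabs r) by (apply Rabs_pos_lt; auto).
  assert (hrn : 0 < Rabs r ^ n) by (apply pow_lt; auto).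
  destruct (hn (eps * Rabs r ^ n)) as [a [b [h1 [h2 h3]]]]; [apply Rmult_lt_0_compat; auto|].
  exists (fun k i => Rmin ((a k i - h i) / r) ((b k i - h i) / r)),
         (fun k i => Rmax ((a k i - h i) / r) ((b k i - h i) / r)).
  split; [|split].
  - intros k i. eapply Rle_trans; [apply Rmin_l|apply Rmax_l].
  - intros y [hy hBy]. destruct (h2 _ hBy) as [k hk]. exists k. intros i hi.
    apply minmax_between. specialize (hk i hi). simpl in hk.
    destruct (Rlt_or_le 0 r) as [p|q].
    + left. split; [apply (Rmult_le_reg_l r); auto; field_simplify; lra|].
      apply (Rmult_le_reg_l r); auto. unfold Rdiv. replace (r * ((b k i - h i) * / r)) with (b k i - h i) by (field; auto). lra.
    + right. assert (r < 0) by lra. split.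
      * apply (Rmult_le_reg_l (- r)); [lra|]. unfold Rdiv.
        replace (- r * ((b k i - h i) * / r)) with (- (b k i - h i)) by (field; auto). nra.
      * apply (Rmult_le_reg_l (- r)); [lra|]. unfold Rdiv.
        replace (- r * ((a k i - h i) * / r)) with (- (a k i - h i)) by (field; auto). nra.
  - intros N. unfold box_vol.
    assert (e : forall k, prodR n (fun i => Rmax ((a k i - h i) / r) ((b k i - h i) / r) - Rmin ((a k i - h i) / r) ((b k i - h i) / r))
                 = (/ Rabs r) ^ n * prodR n (fun i => b k i - a k i)).
    { intros k. rewrite <- prodR_scal. apply prodR_ext. intros i _. rewrite maxmin.
      replace ((a k i - h i) / r - (b k i - h i) / r) with ((b k i - a k i) * / (- r)) by (field; auto).
      rewrite Rabs_mult, Rabs_right; [|pose proof (h1 k i); lra]. rewrite Rabs_inv, Rabs_Ropp. ring. }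
    rewrite (sumR_ext N _ (fun k => (/ Rabs r) ^ n * box_vol n (a k) (b k))); [|intros; apply e].
    rewrite sumR_scal. specialize (h3 N).
    apply Rle_trans with ((/ Rabs r) ^ n * (eps * Rabs r ^ n)).
    + apply Rmult_le_compat_l; auto. apply pow_le. left; apply Rinv_0_lt_compat; auto.
    + rewrite pow_inv. right. field. lra.
Qed.

Definition ov lo hi c d := Rmax 0 (Rmin hi d - Rmax lo c).

Lemma max_cases a b : (Rmax a b = a /\ b <= a) \/ (Rmax a b = b /\ a <= b).
Proof. unfold Rmax; destruct (Rle_dec a b); [right|left]; split; auto; lra. Qed.
Lemma min_cases a b : (Rmin a b = a /\ a <= b) \/ (Rmin a b = b /\ b <= a).
Proof. unfold Rmin; destruct (Rle_dec a b); [left|right]; split; auto; lra. Qed.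

Ltac mm := repeat match goal with
  | |- context [Rmax ?a ?b] => let h := fresh in destruct (max_cases a b) as [[h ?]|[h ?]]; rewrite h in *; clear h
  | |- context [Rmin ?a ?b] => let h := fresh in destruct (min_cases a b) as [[h ?]|[h ?]]; rewrite h in *; clear h
  | H : context [Rmax ?a ?b] |- _ => let h := fresh in destruct (max_cases a b) as [[h ?]|[h ?]]; rewrite h in *; clear h
  | H : context [Rmin ?a ?b] |- _ => let h := fresh in destruct (min_cases a b) as [[h ?]|[h ?]]; rewrite h in *; clear h
  end.

Lemma ov_nonneg lo hi c d : 0 <= ov lo hi c d.
Proof. unfold ov; apply Rmax_l. Qed.

Lemma ov_add lo hi c m d : lo <= hi -> c <= m <= d -> ov lo hi c m + ov lo hi m d = ov lo hi c d.
Proof.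
  intros h1 h2. unfold ov. mm; lra.
Qed.

Lemma ov_le lo hi c d : lo <= hi -> ov lo hi c d <= hi - lo.
Proof.
  intros h. unfold ov. mm; lra.
Qed.

Lemma ov_full lo hi c d : lo <= c -> c <= d -> d <= hi -> ov lo hi c d = d - c.
Proof.
  intros h1 h2 h3. unfold ov. mm; lra.
Qed.

Definition upd (f : nat -> R) i v := fun j => if Nat.eqb j i then v else f j.

Lemma prodR_split m i u v g : (i < m)%nat ->
  prodR m (upd g i (u + v)) = prodR m (upd g i u) + prodR m (upd g i v).
Proof.
  induction m as [|m IH]; intros hi; [lia|]. simpl.
  destruct (Nat.eq_dec i m) as [->|ne].
  - assert (e : forall w, prodR m (upd g m w) = prodR m g).
    { intros w. apply prodR_ext. intros j hj. unfold upd. destruct (Nat.eqb_spec j m); [lia|auto]. }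
    rewrite !e. unfold upd. rewrite Nat.eqb_refl. ring.
  - assert (e : forall w, upd g i w m = g m) by (intros w; unfold upd; destruct (Nat.eqb_spec m i); [lia|auto]).
    rewrite IH; [|lia]. rewrite !e. ring.
Qed.

Lemma prodR_pos m f : (forall i, (i < m)%nat -> 0 < f i) -> 0 < prodR m f.
Proof. induction m; simpl; intros h; [lra|]. apply Rmult_lt_0_compat; [apply IHm; intros; apply h; lia|apply h; lia]. Qed.

Lemma prodR_one m : prodR m (fun _ => 1) = 1.
Proof. induction m; simpl; [auto|rewrite IHm; ring]. Qed.

Lemma enlarge m f d : (forall i, 0 <= f i) -> d > 0 -> exists e, e > 0 /\
  forall e', 0 < e' <= e -> prodR m (fun i => f i + 2 * e') <= prodR m f + d.
Proof.
  revert d. induction m as [|m IH]; intros d hf hd.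
  - exists 1; split; [lra|]. intros; simpl; lra.
  - set (P := prodR m f). assert (hP : 0 <= P) by (apply prodR_nonneg; auto).
    pose proof (hf m) as hfm.
    set (d' := d / (2 * (f m + 3))). assert (hd' : d' > 0) by (unfold d'; apply Rdiv_lt_0_compat; lra).
    destruct (IH d' hf hd') as [e1 [he1 H1]].
    set (e2 := d / (4 * (P + d' + 1))). assert (he2 : e2 > 0) by (unfold e2; apply Rdiv_lt_0_compat; lra).
    exists (Rmin e1 (Rmin 1 e2)). split; [apply Rmin_pos; [lra|apply Rmin_pos; lra]|].
    intros e' [h1 h2]. simpl. fold P.
    assert (he'1 : e' <= e1) by (eapply Rle_trans; [apply h2|apply Rmin_l]).
    assert (he'2 : e' <= 1) by (eapply Rle_trans; [apply h2|]; eapply Rle_trans; [apply Rmin_r|apply Rmin_l]).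
    assert (he'3 : e' <= e2) by (eapply Rle_trans; [apply h2|]; eapply Rle_trans; [apply Rmin_r|apply Rmin_r]).
    specialize (H1 e' (conj h1 he'1)). fold P in H1.
    set (Q := prodR m (fun i => f i + 2 * e')) in *.
    assert (hQ : 0 <= Q) by (apply prodR_nonneg; intros; pose proof (hf i); lra).
    assert (s1 : Q * (f m + 2 * e') <= (P + d') * (f m + 2 * e')) by (apply Rmult_le_compat_r; lra).
    assert (s2 : 2 * e' * (P + d') <= d / 2).
    { apply Rle_trans with (2 * e2 * (P + d')). { apply Rmult_le_compat_r; lra. }
      unfold e2. apply (Rmult_le_reg_r (4 * (P + d' + 1))); [lra|].
      field_simplify; [|lra]. nra. }
    assert (s3 : d' * f m <= d / 2).
    { unfold d'. apply (Rmult_le_reg_r (2 * (f m + 3))); [lra|]. field_simplify; [|lra]. nra. }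
    assert (s4 : d' * (2 * e') <= d' * 2) by nra.
    assert (s5 : d' * 2 <= d' * f m + d' * 6) by nra.
    assert (s6 : d' * (f m + 3) = d / 2) by (unfold d'; field; lra).
    nra.
Qed.

Lemma not_null n : (1 <= n)%nat -> ~ null_set n (Rn n).
Proof.
  intros hn [_ hnull].
  destruct (hnull (/4)) as [a [b [hab [hcov hsum]]]]; [lra|].
  assert (hex : forall k, exists e, e > 0 /\ forall e', 0 < e' <= e ->
     prodR n (fun i => (b k i - a k i) + 2 * e') <= prodR n (fun i => b k i - a k i) + /4 * (/2) ^ (S k)).
  { intros k. apply enlarge. intros i; pose proof (hab k i); lra.
    apply Rmult_lt_0_compat; [lra|apply pow_lt; lra]. }
  set (eta := fun k => proj1_sig (constructive_indefinite_description _ (hex k))).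
  assert (heta : forall k, eta k > 0 /\ forall e', 0 < e' <= eta k ->
     prodR n (fun i => (b k i - a k i) + 2 * e') <= prodR n (fun i => b k i - a k i) + /4 * (/2) ^ (S k)).
  { intros k; unfold eta; destruct (constructive_indefinite_description _ (hex k)); auto. }
  set (A := fun k i => a k i - eta k). set (Bk := fun k i => b k i + eta k).
  assert (AB : forall k i, A k i <= Bk k i) by (intros k i; unfold A, Bk; pose proof (hab k i); pose proof (proj1 (heta k)); lra).
  set (ob := fun k (c d : nat -> R) => prodR n (fun i => ov (A k i) (Bk k i) (c i) (d i))).
  set (cv := fun c d : nat -> R => prodR n (fun i => d i - c i)).
  assert (obnn : forall k c d, 0 <= ob k c d) by (intros; apply prodR_nonneg; intros; apply ov_nonneg).
  set (Inv := fun (cd : (nat -> R) * (nat -> R)) => (forall i, fst cd i <= snd cd i) /\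
          forall N, sumR N (fun k => ob k (fst cd) (snd cd)) <= /2 * cv (fst cd) (snd cd)).
  set (cd0 := ((fun _ : nat => 0), (fun _ : nat => 1))).
  assert (Inv0 : Inv cd0).
  { split; [intros; simpl; lra|]. intros N. simpl.
    assert (cv1 : cv (fun _ => 0) (fun _ => 1) = 1).
    { unfold cv. rewrite (prodR_ext n _ (fun _ => 1)); [apply prodR_one|intros; ring]. }
    rewrite cv1.
    apply Rle_trans with (sumR N (fun k => box_vol n (a k) (b k) + /4 * (/2) ^ (S k))).
    - apply sumR_le. intros k _. unfold ob.
      apply Rle_trans with (prodR n (fun i => (b k i - a k i) + 2 * eta k)).
      + apply prodR_mono. intros i _. split; [apply ov_nonneg|].
        eapply Rle_trans; [apply ov_le, AB|]. unfold A, Bk; lra.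
      + apply heta. split; [apply heta|lra].
    - rewrite sumR_plus, geom. specialize (hsum N). assert (0 <= (/2) ^ N) by (apply pow_le; lra). lra. }
  set (half := fun i (cd : (nat -> R) * (nat -> R)) =>
     let m := (fst cd i + snd cd i) / 2 in
     if excluded_middle_informative (Inv (fst cd, upd (snd cd) i m)) then (fst cd, upd (snd cd) i m)
     else (upd (fst cd) i m, snd cd)).
  assert (obsplit : forall k c d i m, (i < n)%nat -> c i <= m <= d i ->
     ob k c d = ob k c (upd d i m) + ob k (upd c i m) d).
  { intros k c d i m hi hm. set (g := fun j => ov (A k j) (Bk k j) (c j) (d j)).
    assert (e1 : ob k c d = prodR n (upd g i (ov (A k i) (Bk k i) (c i) m + ov (A k i) (Bk k i) m (d i)))).
    { unfold ob. apply prodR_ext. intros j _. unfold upd, g. destruct (Nat.eqb_spec j i); [subst; rewrite ov_add; auto|auto]. }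
    assert (e2 : ob k c (upd d i m) = prodR n (upd g i (ov (A k i) (Bk k i) (c i) m))).
    { unfold ob. apply prodR_ext. intros j _. unfold upd, g. destruct (Nat.eqb_spec j i); [subst; auto|auto]. }
    assert (e3 : ob k (upd c i m) d = prodR n (upd g i (ov (A k i) (Bk k i) m (d i)))).
    { unfold ob. apply prodR_ext. intros j _. unfold upd, g. destruct (Nat.eqb_spec j i); [subst; auto|auto]. }
    rewrite e1, e2, e3. apply prodR_split; auto. }
  assert (cvsplit : forall c d i, (i < n)%nat ->
     cv c (upd d i ((c i + d i)/2)) = /2 * cv c d /\ cv (upd c i ((c i + d i)/2)) d = /2 * cv c d).
  { intros c d i hi. set (m := (c i + d i) / 2). set (g := fun j => d j - c j).
    assert (e1 : cv c d = prodR n (upd g i ((m - c i) + (d i - m)))).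
    { unfold cv. apply prodR_ext. intros j _. unfold upd, g. destruct (Nat.eqb_spec j i); [subst; ring|auto]. }
    assert (e2 : cv c (upd d i m) = prodR n (upd g i (m - c i))).
    { unfold cv. apply prodR_ext. intros j _. unfold upd, g. destruct (Nat.eqb_spec j i); [subst; auto|auto]. }
    assert (e3 : cv (upd c i m) d = prodR n (upd g i (d i - m))).
    { unfold cv. apply prodR_ext. intros j _. unfold upd, g. destruct (Nat.eqb_spec j i); [subst; auto|auto]. }
    assert (e4 : d i - m = m - c i) by (unfold m; field).
    rewrite prodR_split in e1; auto. rewrite e4 in e1, e3. split; lra. }
  assert (half_inv : forall i cd, (i < n)%nat -> Inv cd -> Inv (half i cd)).
  { intros i [c d] hi [h1 h2]. unfold half; simpl.
    destruct (excluded_middle_informative _) as [hL|hL]; auto.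
    simpl. set (m := (c i + d i) / 2) in *.
    assert (hm : c i <= m <= d i) by (pose proof (h1 i); simpl in *; unfold m; lra).
    split.
    - intros j; simpl. unfold upd. destruct (Nat.eqb_spec j i); [subst; lra|apply h1].
    - intros N2. apply NNPP; intro no2. apply hL. split.
      + intros j; simpl. unfold upd. destruct (Nat.eqb_spec j i); [subst; lra|apply h1].
      + intros N1. apply NNPP; intro no1. simpl in no1, no2.
        set (N := max N1 N2).
        assert (s1 : sumR N1 (fun k => ob k c (upd d i m)) <= sumR N (fun k => ob k c (upd d i m))) by (apply sumR_mono; [intros; apply obnn|lia]).
        assert (s2 : sumR N2 (fun k => ob k (upd c i m) d) <= sumR N (fun k => ob k (upd c i m) d)) by (apply sumR_mono; [intros; apply obnn|lia]).
        assert (s3 : sumR N (fun k => ob k c d) = sumR N (fun k => ob k c (upd d i m)) + sumR N (fun k => ob k (upd c i m) d)).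
        { rewrite <- sumR_plus. apply sumR_ext. intros k _. apply obsplit; auto. }
        pose proof (h2 N) as h3. simpl in h3. destruct (cvsplit c d i hi) as [c1 c2]. fold m in c1, c2. lra. }
  set (FL := fun L cd => fold_left (fun cd i => half i cd) L cd).
  assert (FL_inv : forall L cd, (forall i, In i L -> (i < n)%nat) -> Inv cd -> Inv (FL L cd)).
  { induction L as [|i L IH]; intros cd hL hI; simpl; auto. apply IH; [intros; apply hL; simpl; auto|].
    apply half_inv; auto. apply hL; simpl; auto. }
  assert (half_props : forall i cd, (i < n)%nat -> Inv cd ->
     (forall j, fst cd j <= fst (half i cd) j /\ snd (half i cd) j <= snd cd j) /\
     (snd (half i cd) i - fst (half i cd) i = (snd cd i - fst cd i) / 2) /\
     (forall j, j <> i -> fst (half i cd) j = fst cd j /\ snd (half i cd) j = snd cd j)).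
  { intros i [c d] hi [h1 _]. simpl in h1. unfold half; simpl.
    destruct (excluded_middle_informative _); simpl; unfold upd; rewrite Nat.eqb_refl;
    (split; [intros j; destruct (Nat.eqb_spec j i); [subst; pose proof (h1 i); lra|lra]|]);
    (split; [field|intros j hj; destruct (Nat.eqb_spec j i); [contradiction|auto]]). }
  assert (FL_props : forall L cd, NoDup L -> (forall i, In i L -> (i < n)%nat) -> Inv cd -> forall j,
     (fst cd j <= fst (FL L cd) j /\ snd (FL L cd) j <= snd cd j) /\
     (In j L -> snd (FL L cd) j - fst (FL L cd) j = (snd cd j - fst cd j) / 2) /\
     (~ In j L -> snd (FL L cd) j - fst (FL L cd) j = snd cd j - fst cd j)).
  { induction L as [|i L IH]; intros cd nd hL hI j.
    - simpl. split; [lra|]. split; [tauto|lra].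
    - inversion nd as [|i' L' ni nd']; subst. simpl.
      assert (hi : (i < n)%nat) by (apply hL; simpl; auto).
      destruct (half_props i cd hi hI) as [p1 [p2 p3]].
      destruct (IH (half i cd) nd' ltac:(intros; apply hL; simpl; auto) (half_inv i cd hi hI) j) as [q1 [q2 q3]].
      fold (FL L (half i cd)). split; [split; [eapply Rle_trans; [apply p1|apply q1]|eapply Rle_trans; [apply q1|apply p1]]|].
      split.
      + intros [e|hj].
        * subst j. rewrite q3; auto.
        * rewrite q2; auto. assert (j <> i) by (intro; subst; contradiction). destruct (p3 j H) as [e1 e2]. rewrite e1, e2; auto.
      + intros hj. assert (j <> i) by (intro; subst; apply hj; simpl; auto).
        rewrite q3; [|intro; apply hj; simpl; auto]. destruct (p3 j H) as [e1 e2]. rewrite e1, e2; auto. }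
  set (full := fun cd => FL (seq 0 n) cd).
  set (Q := fix Q k := match k with O => cd0 | S k => full (Q k) end).
  assert (QI : forall k, Inv (Q k)).
  { induction k; simpl; auto. apply FL_inv; auto. intros i hi. apply in_seq in hi; lia. }
  assert (Qp : forall k j, (fst (Q k) j <= fst (Q (S k)) j /\ snd (Q (S k)) j <= snd (Q k) j) /\
              ((j < n)%nat -> snd (Q (S k)) j - fst (Q (S k)) j = (snd (Q k) j - fst (Q k) j) / 2)).
  { intros k j. destruct (FL_props (seq 0 n) (Q k) (seq_NoDup n 0) ltac:(intros i hi; apply in_seq in hi; lia) (QI k) j) as [p1 [p2 _]].
    split; [exact p1|]. intros hj. apply p2. apply in_seq; lia. }
  assert (Qside : forall k j, (j < n)%nat -> snd (Q k) j - fst (Q k) j = (/2) ^ k).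
  { induction k; intros j hj. { simpl; lra. } rewrite (proj2 (Qp k j) hj), IHk; auto. simpl; field. }
  assert (Qnest : forall k m j, (k <= m)%nat -> fst (Q k) j <= fst (Q m) j /\ snd (Q m) j <= snd (Q k) j).
  { intros k m j hkm. induction hkm; [lra|]. destruct (Qp m j) as [[h1 h2] _]. lra. }
  assert (cau : forall i, (i < n)%nat -> Cauchy_crit (fun k => fst (Q k) i)).
  { intros i hi eps he. destruct (pow_lt_1_zero (/2) ltac:(rewrite Rabs_right; lra) eps he) as [N hN].
    exists N. intros p q hp hq. unfold R_dist.
    destruct (Qnest N p i hp). destruct (Qnest N q i hq).
    pose proof (proj1 (QI p) i). pose proof (proj1 (QI q) i). pose proof (Qside N i hi).
    pose proof (hN N (le_n N)). rewrite Rabs_right in H6; [|apply Rle_ge, pow_le; lra].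
    apply Rabs_def1; lra. }
  set (x := fun i => match lt_dec i n with left h => proj1_sig (R_complete _ (cau i h)) | right _ => 0 end).
  assert (xb : forall k i, (i < n)%nat -> fst (Q k) i <= x i <= snd (Q k) i).
  { intros k i hi. unfold x. destruct (lt_dec i n) as [h|h]; [|lia].
    destruct (R_complete _ (cau i h)) as [l hl]; simpl.
    set (mid := (fst (Q k) i + snd (Q k) i) / 2). set (hw := (snd (Q k) i - fst (Q k) i) / 2).
    assert (Rabs (l - mid) <= hw).
    { apply (lim_bound (fun k => fst (Q k) i) l k); auto. intros m hm.
      destruct (Qnest k m i hm). pose proof (proj1 (QI m) i). apply Rabs_le. unfold mid, hw. lra. }
    pose proof (Rle_abs (l - mid)). pose proof (Rle_abs (- (l - mid))). rewrite Rabs_Ropp in H1.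
    unfold mid, hw in *. lra. }
  assert (xRn : Rn n x) by (intros i hi; unfold x; destruct (lt_dec i n); [lia|auto]).
  destruct (hcov x xRn) as [k0 hk0].
  destruct (heta k0) as [he0 _].
  destruct (pow_lt_1_zero (/2) ltac:(rewrite Rabs_right; lra) (eta k0) he0) as [K1 hK1].
  specialize (hK1 K1 (le_n K1)). rewrite Rabs_right in hK1; [|apply Rle_ge, pow_le; lra].
  set (c := fst (Q K1)). set (d := snd (Q K1)).
  assert (eq : ob k0 c d = cv c d).
  { unfold ob, cv. apply prodR_ext. intros i hi. apply ov_full.
    - pose proof (xb K1 i hi). pose proof (Qside K1 i hi). pose proof (hk0 i hi). unfold A, c, d in *. lra.
    - pose proof (proj1 (QI K1) i). unfold c, d; lra.
    - pose proof (xb K1 i hi). pose proof (Qside K1 i hi). pose proof (hk0 i hi). unfold Bk, c, d in *. lra. }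
  assert (pos : 0 < cv c d).
  { unfold cv. apply prodR_pos. intros i hi. unfold c, d. rewrite Qside; auto. apply pow_lt; lra. }
  assert (hI : sumR (S k0) (fun k => ob k c d) <= /2 * cv c d) by (apply (proj2 (QI K1))).
  pose proof (sumR_term (S k0) (fun k => ob k c d) k0 ltac:(intros; apply obnn) ltac:(lia)) as ht.
  cbv beta in ht. lra.
Qed.

From Stdlib Require Import Classical ClassicalEpsilon FunctionalExtensionality PropExtensionality.
From mathcomp Require ssreflect ssrfun ssrbool eqtype ssrnat boolp classical_sets wochoice.

Module ZL.
Import ssreflect ssrfun ssrbool eqtype boolp classical_sets wochoice.
Local Open Scope classical_set_scope.
Lemma zorn (T:Type) (P : (T->Prop) -> Prop) :
  (forall F : (T->Prop)->Prop, (forall A, F A -> P A) ->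
     (forall A B, F A -> F B -> (forall t, A t -> B t) \/ (forall t, B t -> A t)) ->
     P (fun t => exists A, F A /\ A t)) ->
  exists A, P A /\ forall B, (forall t, A t -> B t) -> P B -> forall t, B t -> A t.
Proof.
move=> H.
have [A [PA Amax]] : exists A : set T, P A /\ (forall B : set T, (A `<` B)%classic -> ~ P B).
  apply: Zorn_bigcup.
  move=> F FP Ftot.
  have -> : (\bigcup_(X in F) X) = (fun t => exists A, F A /\ A t).
    apply: funext => t; apply: propext; split.
    - by case=> X FX Xt; exists X.
    - by case=> X [FX Xt]; exists X.
  apply: H; [exact: FP|].
  move=> A0 B0 FA FB; case: (Ftot A0 B0 FA FB) => h; [left|right] => t; exact: h.
exists A; split => // B AB PB t Bt.
apply: NNPP => nAt.
apply: (Amax B) => //; split.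
- move=> x; exact: AB.
- move=> hBA; apply: nAt; exact: hBA.
Qed.

Lemma well_order_exists (K : Type) : exists R : K -> K -> bool, well_order R.
Proof. have [R HR] := well_ordering_principle {classic K}. by exists R. Qed.
End ZL.


Require Import Defs.
From Stdlib Require Import Classical ClassicalEpsilon FunctionalExtensionality PropExtensionality.
From Stdlib Require Import Arith Lia List Cantor.
Open Scope nat_scope.
Set Bullet Behavior "Strict Subproofs".
Open Scope nat_scope.

Lemma le_card_refl X : le_card X X.
Proof. exists (fun x => x); auto. Qed.

Lemma le_card_trans X Y Z : le_card X Y -> le_card Y Z -> le_card X Z.
Proof. intros [f Hf] [g Hg]. exists (fun x => g (f x)); auto. Qed.

Lemma le_card_sig_inj X Y (P : X -> Prop) (g : X -> Y) :
  (forall u v, P u -> P v -> g u = g v -> u = v) -> le_card {u | P u} Y.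
Proof.
  intros H. exists (fun u => g (proj1_sig u)).
  intros [u pu] [v pv] E; simpl in E. pose proof (H u v pu pv E); subst.
  f_equal; apply proof_irrelevance.
Qed.

Lemma le_card_comp X Y : le_card X Y \/ le_card Y X.
Proof.
  destruct (ZL.zorn (X*Y) (fun R => (forall x y y', R (x,y) -> R (x,y') -> y = y') /\
                                 (forall x x' y, R (x,y) -> R (x',y) -> x = x'))) as [A [[Af Ai] Amax]].
  - intros F FP Fch. split.
    + intros x y y' [B [FB By]] [C [FC Cy]].
      destruct (Fch B C FB FC) as [h|h].
      * apply (proj1 (FP C FC) x); auto.
      * apply (proj1 (FP B FB) x); auto.
    + intros x x' y [B [FB By]] [C [FC Cy]].
      destruct (Fch B C FB FC) as [h|h].
      * apply (proj2 (FP C FC) x x' y); auto.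
      * apply (proj2 (FP B FB) x x' y); auto.
  - destruct (classic (forall x, exists y, A (x,y))) as [Hx|Hx].
    { left. exists (fun x => proj1_sig (constructive_indefinite_description _ (Hx x))).
      intros u v E.
      destruct (constructive_indefinite_description _ (Hx u)) as [yu pu].
      destruct (constructive_indefinite_description _ (Hx v)) as [yv pv]. simpl in E; subst.
      eapply Ai; eauto. }
    destruct (classic (forall y, exists x, A (x,y))) as [Hy|Hy].
    { right. exists (fun y => proj1_sig (constructive_indefinite_description _ (Hy y))).
      intros u v E.
      destruct (constructive_indefinite_description _ (Hy u)) as [yu pu].
      destruct (constructive_indefinite_description _ (Hy v)) as [yv pv]. simpl in E; subst.
      eapply Af; eauto. }
    exfalso.
    apply not_all_ex_not in Hx as [x0 Hx0]. apply not_all_ex_not in Hy as [y0 Hy0].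
    assert (HA : A (x0,y0)).
    { apply (Amax (fun p => A p \/ p = (x0,y0))).
      - auto.
      - split.
        + intros x y y' [h1|h1] [h2|h2].
          * eauto.
          * inversion h2; subst. exfalso; apply Hx0; eauto.
          * inversion h1; subst. exfalso; apply Hx0; eauto.
          * inversion h1; inversion h2; subst; auto.
        + intros x x' y [h1|h1] [h2|h2].
          * eauto.
          * inversion h2; subst. exfalso; apply Hy0; eauto.
          * inversion h1; subst. exfalso; apply Hy0; eauto.
          * inversion h1; inversion h2; subst; auto.
      - auto. }
    apply Hx0; eauto.
Qed.

Require Import Defs.
From Stdlib Require Import Classical ClassicalEpsilon FunctionalExtensionality PropExtensionality.
From Stdlib Require Import Arith Lia List Cantor.
Open Scope nat_scope.

Definition Dof {X} (R : (X*X)*X -> Prop) (a : X) := exists c, R ((a,a),c).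

Definition HP {X} (R : (X*X)*X -> Prop) :=
  (forall a b c, R ((a,b),c) -> Dof R a /\ Dof R b /\ Dof R c) /\
  (forall a b, Dof R a -> Dof R b -> exists c, R ((a,b),c)) /\
  (forall p c c', R (p,c) -> R (p,c') -> c = c') /\
  (forall p p' c, R (p,c) -> R (p',c) -> p = p') /\
  ((forall a, ~ Dof R a) \/ le_card nat {a | Dof R a}).

Lemma Dof_mono X (A B : (X*X)*X -> Prop) : (forall t, A t -> B t) -> forall a, Dof A a -> Dof B a.
Proof. intros h a [c hc]; exists c; auto. Qed.

Lemma le_card_nat_sub X (P Q : X -> Prop) : (forall a, P a -> Q a) ->
  le_card nat {a | P a} -> le_card nat {a | Q a}.
Proof.
  intros h [f hf]. exists (fun i => exist Q (proj1_sig (f i)) (h _ (proj2_sig (f i)))).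
  intros u v E. apply hf. apply (f_equal (@proj1_sig _ _)) in E. simpl in E.
  destruct (f u), (f v); simpl in *; subst; f_equal; apply proof_irrelevance.
Qed.

Lemma HP_chain X : forall F : ((X*X)*X -> Prop) -> Prop, (forall A, F A -> HP A) ->
     (forall A B, F A -> F B -> (forall t, A t -> B t) \/ (forall t, B t -> A t)) ->
     HP (fun t => exists A, F A /\ A t).
Proof.
  intros F FP Fch.
  set (U := fun t => exists A, F A /\ A t).
  assert (sub : forall A, F A -> forall t, A t -> U t) by (intros A FA t At; exists A; auto).
  assert (DU : forall a, Dof U a -> exists A, F A /\ Dof A a).
  { intros a [c [A [FA Ac]]]. exists A; split; auto. exists c; auto. }
  assert (two : forall A B, F A -> F B -> exists C, F C /\ (forall t, A t -> C t) /\ (forall t, B t -> C t)).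
  { intros A B FA FB. destruct (Fch A B FA FB) as [h|h]; [exists B|exists A]; auto. }
  unfold HP; split; [|split; [|split; [|split]]].
  - intros a b c [A [FA Ac]]. destruct (FP A FA) as [h1 _].
    destruct (h1 _ _ _ Ac) as [h2 [h3 h4]].
    repeat split; eapply Dof_mono; try apply (sub A FA); auto.
  - intros a b Da Db. apply DU in Da as [A [FA Da]]. apply DU in Db as [B [FB Db]].
    destruct (two A B FA FB) as [C [FC [hA hB]]].
    pose proof (Dof_mono _ _ _ hA a Da) as Da'.
    pose proof (Dof_mono _ _ _ hB b Db) as Db'.
    destruct (proj1 (proj2 (FP C FC)) a b Da' Db') as [c hc].
    exists c. apply (sub C); auto.
  - intros p c c' [A [FA Ac]] [B [FB Bc]].
    destruct (two A B FA FB) as [C [FC [hA hB]]].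
    destruct (FP C FC) as [_ [_ [h _]]]. eauto.
  - intros p p' c [A [FA Ac]] [B [FB Bc]].
    destruct (two A B FA FB) as [C [FC [hA hB]]].
    destruct (FP C FC) as [_ [_ [_ [h _]]]]. eauto.
  - destruct (classic (exists A, F A /\ le_card nat {a | Dof A a})) as [[A [FA HA]]|H].
    + right. eapply le_card_nat_sub; [|exact HA]. apply Dof_mono. apply sub; auto.
    + left. intros a Da. apply DU in Da as [A [FA Da]].
      destruct (FP A FA) as [_ [_ [_ [_ [h|h]]]]].
      * eapply h; eauto.
      * apply H; eauto.
Qed.

Lemma hess X : le_card nat X -> le_card (X*X) X.
Proof.
  intros [e He].
  destruct (ZL.zorn _ HP (HP_chain X)) as [R [HR Rmax]].
  destruct HR as [H1 [H2 [H3 [H4 H5]]]].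
  destruct H5 as [Dempty | Dinf].
  - exfalso.
    set (R0 := fun t : (X*X)*X => exists i j, fst (fst t) = e i /\ snd (fst t) = e j /\
                 snd t = e (Cantor.to_nat (i,j))).
    assert (D0 : forall a, Dof R0 a <-> exists i, a = e i).
    { intros a; split.
      - intros [c [i [j [h1 [h2 h3]]]]]. exists i; auto.
      - intros [i ->]. exists (e (Cantor.to_nat (i,i))). exists i, i; auto. }
    assert (HR0 : HP R0).
    { unfold HP; split; [|split; [|split; [|split]]].
      - intros a b c [i [j [h1 [h2 h3]]]]; cbn [fst snd] in *.
        repeat split; apply D0; eauto.
      - intros a b Da Db. apply D0 in Da as [i ->]. apply D0 in Db as [j ->].
        exists (e (Cantor.to_nat (i,j))). exists i, j; auto.
      - intros [a b] c c' [i [j [h1 [h2 h3]]]] [i' [j' [h1' [h2' h3']]]]; cbn [fst snd] in *.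
        subst. apply He in h1'. apply He in h2'. subst. auto.
      - intros [a b] [a' b'] c [i [j [h1 [h2 h3]]]] [i' [j' [h1' [h2' h3']]]]; cbn [fst snd] in *.
        subst. apply He in h3'. apply Cantor.to_nat_inj in h3'. inversion h3'; subst; auto.
      - right. exists (fun i => exist (Dof R0) (e i) (proj2 (D0 (e i)) (ex_intro _ i eq_refl))).
        intros u v E. apply (f_equal (@proj1_sig _ _)) in E. simpl in E. auto. }
    assert (sub : forall t, R t -> R0 t).
    { intros [[a b] c] h. destruct (H1 _ _ _ h) as [h' _]. exfalso; eapply Dempty; eauto. }
    pose proof (Rmax R0 sub HR0 ((e 0, e 0), e (Cantor.to_nat (0,0)))) as h.
    apply (Dempty (e 0)). exists (e (Cantor.to_nat (0,0))). apply h. exists 0, 0; auto.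
  - destruct Dinf as [io Hio].
    set (d1 := proj1_sig (io 0)). set (d2 := proj1_sig (io 1)).
    assert (Dd1 : Dof R d1) by exact (proj2_sig (io 0)).
    assert (Dd2 : Dof R d2) by exact (proj2_sig (io 1)).
    assert (d12 : d1 <> d2).
    { intros E. assert (io 0 = io 1) as E'.
      { destruct (io 0), (io 1); simpl in *. unfold d1, d2 in E; simpl in E. subst. f_equal; apply proof_irrelevance. }
      apply Hio in E'. discriminate. }
    set (inh := inhabits (e 0)).
    set (F := fun a b => epsilon inh (fun c => R ((a,b),c))).
    assert (FR : forall a b, Dof R a -> Dof R b -> R ((a,b), F a b)).
    { intros a b Da Db. unfold F. apply epsilon_spec. apply H2; auto. }
    assert (FD : forall a b, Dof R a -> Dof R b -> Dof R (F a b)).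
    { intros a b Da Db. exact (proj2 (proj2 (H1 _ _ _ (FR a b Da Db)))). }
    assert (Finj : forall a b a' b', Dof R a -> Dof R b -> Dof R a' -> Dof R b' ->
                    F a b = F a' b' -> a = a' /\ b = b').
    { intros a b a' b' Da Db Da' Db' E.
      pose proof (FR a b Da Db) as r1. pose proof (FR a' b' Da' Db') as r2. rewrite E in r1.
      pose proof (H4 _ _ _ r1 r2) as h. inversion h; auto. }
    destruct (le_card_comp {a | ~ Dof R a} {a | Dof R a}) as [[g0 Hg0] | [g0 Hg0]].
    + set (phi := fun x => match excluded_middle_informative (Dof R x) with
                           | left _ => F x d1
                           | right h => F (proj1_sig (g0 (exist _ x h))) d2 end).
      assert (phiD : forall x, Dof R (phi x)).
      { intros x; unfold phi. destruct (excluded_middle_informative (Dof R x)).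
        - apply FD; auto.
        - apply FD; auto. apply (proj2_sig (g0 _)). }
      assert (phiinj : forall x y, phi x = phi y -> x = y).
      { intros x y; unfold phi.
        destruct (excluded_middle_informative (Dof R x)) as [hx|hx];
        destruct (excluded_middle_informative (Dof R y)) as [hy|hy]; intros E.
        - apply Finj in E; tauto.
        - apply Finj in E; auto; try apply (proj2_sig (g0 _)). destruct E; contradiction.
        - apply Finj in E; auto; try apply (proj2_sig (g0 _)). destruct E. congruence.
        - apply Finj in E; try apply (proj2_sig (g0 _)); auto. destruct E as [E _].
          assert (g0 (exist _ x hx) = g0 (exist _ y hy)) as E'.
          { destruct (g0 (exist _ x hx)), (g0 (exist _ y hy)); simpl in *; subst; f_equal; apply proof_irrelevance. }
          apply Hg0 in E'. inversion E'; auto. }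
      exists (fun p => F (phi (fst p)) (phi (snd p))).
      intros [x y] [x' y'] E; simpl in E. apply Finj in E; auto.
      destruct E as [E1 E2]. apply phiinj in E1. apply phiinj in E2. subst; auto.
    + exfalso.
      set (G := fun a => match excluded_middle_informative (Dof R a) with
                         | left h => proj1_sig (g0 (exist _ a h)) | right _ => a end).
      assert (GnD : forall a, Dof R a -> ~ Dof R (G a)).
      { intros a Da; unfold G. destruct (excluded_middle_informative (Dof R a)); [|contradiction].
        apply (proj2_sig (g0 _)). }
      assert (Ginj : forall a b, Dof R a -> Dof R b -> G a = G b -> a = b).
      { intros a b Da Db; unfold G.
        destruct (excluded_middle_informative (Dof R a)); [|contradiction].
        destruct (excluded_middle_informative (Dof R b)); [|contradiction].
        intros E. assert (g0 (exist _ a d) = g0 (exist _ b d0)) as E'.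
        { destruct (g0 (exist _ a d)), (g0 (exist _ b d0)); simpl in *; subst; f_equal; apply proof_irrelevance. }
        apply Hg0 in E'. inversion E'; auto. }
      set (D' := fun a => Dof R a \/ exists d, Dof R d /\ a = G d).
      set (Ginv := fun a => epsilon inh (fun d => Dof R d /\ a = G d)).
      assert (GinvS : forall a, ~ Dof R a -> D' a -> Dof R (Ginv a) /\ a = G (Ginv a)).
      { intros a na [h|h]; [contradiction|]. unfold Ginv. apply epsilon_spec. exact h. }
      set (c := fun a => match excluded_middle_informative (Dof R a) with
                         | left _ => F a d1 | right _ => F (Ginv a) d2 end).
      assert (cD : forall a, D' a -> Dof R (c a)).
      { intros a Da; unfold c. destruct (excluded_middle_informative (Dof R a)).
        - apply FD; auto.
        - apply FD; auto. apply GinvS; auto. }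
      assert (cinj : forall a b, D' a -> D' b -> c a = c b -> a = b).
      { intros a b Da Db; unfold c.
        destruct (excluded_middle_informative (Dof R a)) as [ha|ha];
        destruct (excluded_middle_informative (Dof R b)) as [hb|hb]; intros E.
        - apply Finj in E; tauto.
        - apply Finj in E; auto; try apply GinvS; auto. destruct E; contradiction.
        - apply Finj in E; auto; try apply GinvS; auto. destruct E; congruence.
        - apply Finj in E; auto; try apply GinvS; auto. destruct E as [E _].
          destruct (GinvS a ha Da) as [_ ea]. destruct (GinvS b hb Db) as [_ eb].
          rewrite ea, eb, E; auto. }
      set (k := fun a b => G (F (c a) (c b))).
      assert (kD : forall a b, D' a -> D' b -> D' (k a b) /\ ~ Dof R (k a b)).
      { intros a b Da Db. unfold k. split.
        - right. exists (F (c a) (c b)); split; [apply FD; apply cD; auto | reflexivity].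
        - apply GnD. apply FD; apply cD; auto. }
      assert (kinj : forall a b a' b', D' a -> D' b -> D' a' -> D' b' -> k a b = k a' b' -> a = a' /\ b = b').
      { intros a b a' b' Da Db Da' Db' E. unfold k in E.
        apply Ginj in E; try (apply FD; apply cD; auto).
        apply Finj in E; try apply cD; auto. destruct E as [E1 E2].
        split; apply cinj; auto. }
      set (R' := fun t : (X*X)*X => R t \/ (D' (fst (fst t)) /\ D' (snd (fst t)) /\
                  ~ (Dof R (fst (fst t)) /\ Dof R (snd (fst t))) /\ snd t = k (fst (fst t)) (snd (fst t)))).
      assert (RD' : forall a, Dof R a -> D' a) by (intros a h; left; exact h).
      assert (DR' : forall a, Dof R' a <-> D' a).
      { intros a; split.
        - intros [c0 [h|h]].
          + left. exists c0; exact h.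
          + simpl in h; tauto.
        - intros Da. destruct (classic (Dof R a)) as [h|h].
          + exists (F a a). left. apply FR; auto.
          + exists (k a a). right. simpl. tauto. }
      assert (HR' : HP R').
      { unfold HP; split; [|split; [|split; [|split]]].
        - intros a b c0 [h|h]; simpl in *.
          + destruct (H1 _ _ _ h) as [x1 [x2 x3]]. repeat split; apply DR'; auto.
          + destruct h as [ha [hb [_ ->]]]. repeat split; apply DR'; auto. apply kD; auto.
        - intros a b Da Db. apply DR' in Da. apply DR' in Db.
          destruct (classic (Dof R a /\ Dof R b)) as [[ha hb]|h].
          + exists (F a b); left; apply FR; auto.
          + exists (k a b); right; simpl; tauto.
        - intros [a b] c0 c0' [h|h] [h'|h']; simpl in *.
          + eauto.
          + destruct (H1 _ _ _ h) as [x1 [x2 x3]]. tauto.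
          + destruct (H1 _ _ _ h') as [x1 [x2 x3]]. tauto.
          + destruct h as [_ [_ [_ ->]]]. destruct h' as [_ [_ [_ ->]]]. auto.
        - intros [a b] [a' b'] c0 [h|h] [h'|h']; simpl in *.
          + eauto.
          + destruct (H1 _ _ _ h) as [x1 [x2 x3]]. destruct h' as [ha [hb [_ E]]].
            subst c0. exfalso; exact (proj2 (kD _ _ ha hb) x3).
          + destruct (H1 _ _ _ h') as [x1 [x2 x3]]. destruct h as [ha [hb [_ E]]].
            subst c0. exfalso; exact (proj2 (kD _ _ ha hb) x3).
          + destruct h as [ha [hb [_ ->]]]. destruct h' as [ha' [hb' [_ E]]].
            apply kinj in E; auto. destruct E; subst; auto.
        - right. apply (le_card_nat_sub _ (Dof R)); [|exists io; exact Hio].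
          intros a h. apply DR'. left; exact h. }
      assert (sub : forall t, R t -> R' t) by (intros t h; left; exact h).
      pose proof (Rmax R' sub HR') as back.
      assert (hD : D' (G d1)) by (right; exists d1; auto).
      apply DR' in hD as [c0 hc0]. apply back in hc0.
      apply (GnD d1 Dd1). exists c0; exact hc0.
Qed.

From Stdlib Require Import Classical ClassicalEpsilon FunctionalExtensionality PropExtensionality.
From mathcomp Require ssreflect ssrfun ssrbool eqtype ssrnat boolp classical_sets wochoice.
Open Scope nat_scope.
Module WO.
Import ssreflect ssrfun ssrbool eqtype boolp wochoice.
Local Set Bullet Behavior "None".
Lemma wo_min (K:Type) (R: K -> K -> bool) : well_order R -> forall P : K -> Prop, (exists x, P x) ->
  exists z, P z /\ (forall x, P x -> R z x) /\ (forall z', P z' -> (forall x, P x -> R z' x) -> z' = z).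
Proof.
move=> wo P [x Px].
have [|z [[Az lb] uniq]] := wo (fun x => `[< P x >]).
  by exists x; rewrite /in_mem /=; apply/asboolP.
exists z; split; first by move: Az; rewrite /in_mem /= => /asboolP.
split.
  by move=> y Py; apply: lb; rewrite /in_mem /=; apply/asboolP.
move=> z' Pz' lbz'; apply: esym; apply: uniq; split.
  by rewrite /in_mem /=; apply/asboolP.
by move=> y; rewrite /in_mem /= => /asboolP; apply: lbz'.
Qed.

Lemma wo_prop (K : Type) : exists lt : K -> K -> Prop, well_founded lt /\
  (forall u v, lt u v \/ u = v \/ lt v u) /\ (forall u v w, lt u v -> lt v w -> lt u w) /\
  (forall u, ~ lt u u).
Proof.
have [R wo] := well_ordering_principle {classic K}.
have M := @wo_min _ _ wo.
have refl : forall u, R u u.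
  move=> u; have [z [-> [h _]]] := M (fun x => x = u) (ex_intro _ u erefl); exact: h.
have tot : forall u v, R u v \/ R v u.
  move=> u v; have [z [Pz [h _]]] := M (fun x => x = u \/ x = v) (ex_intro _ u (or_introl erefl)).
  case: Pz => e; subst z; [left|right]; apply: h; auto.
have anti : forall u v, R u v -> R v u -> u = v.
  move=> u v huv hvu.
  have [z [Pz [h U]]] := M (fun x => x = u \/ x = v) (ex_intro _ u (or_introl erefl)).
  have e1 := U u (or_introl erefl) (fun x => fun hx => match hx with or_introl e => ltac:(rewrite e; exact: refl) | or_intror e => ltac:(rewrite e; exact: huv) end).
  have e2 := U v (or_intror erefl) (fun x => fun hx => match hx with or_introl e => ltac:(rewrite e; exact: hvu) | or_intror e => ltac:(rewrite e; exact: refl) end).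
  by rewrite e1 e2.
have trans : forall u v w, R u v -> R v w -> R u w.
  move=> u v w huv hvw.
  have [z [Pz [h _]]] := M (fun x => x = u \/ x = v \/ x = w) (ex_intro _ u (or_introl erefl)).
  case: Pz => [e|[e|e]]; subst z.
  - by apply: h; auto.
  - have e : u = v by apply: anti => //; apply: h; auto.
    by rewrite e.
  - have e : v = w by apply: anti => //; apply: h; auto.
    by rewrite -e.
exists (fun u v => R u v /\ u <> v).
split; last split; last split.
- move=> a; apply: NNPP => na.
  have [z [Pz [h _]]] := M (fun x => ~ Acc (fun u v => R u v /\ u <> v) x) (ex_intro _ a na).
  apply: Pz; constructor => y [hyz ne]; apply: NNPP => ny.
  by apply: ne; apply: anti => //; apply: h.
- move=> u v; case: (Classical_Prop.classic (u = v)) => [->|ne]; first by right; left.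
  by case: (tot u v) => h; [left|right; right]; split => // e; apply: ne.
- move=> u v w [h1 n1] [h2 n2]; split; first exact: trans h2.
  move=> e; subst w; apply: n1; exact: anti.
- by move=> u [_ h].
Qed.
End WO.

Require Import Defs.
From Stdlib Require Import Classical ClassicalEpsilon FunctionalExtensionality PropExtensionality.
From Stdlib Require Import Arith Lia List Cantor Wellfounded.
Open Scope nat_scope.
Set Bullet Behavior "Strict Subproofs".

Lemma wf_min {A} (lt : A -> A -> Prop) (P : A -> Prop) : well_founded lt ->
  forall a, P a -> exists m, P m /\ forall y, lt y m -> ~ P y.
Proof.
  intros wf a. induction a as [a IH] using (well_founded_ind wf). intros Pa.
  destruct (classic (exists y, lt y a /\ P y)) as [[y [hy Py]]|no].
  - exact (IH y hy Py).
  - exists a; split; auto. intros y hy Py; apply no; eauto.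
Qed.

Lemma sig_eq {A} (P : A -> Prop) (u v : {x | P x}) : proj1_sig u = proj1_sig v -> u = v.
Proof. destruct u, v; simpl; intros; subst; f_equal; apply proof_irrelevance. Qed.

Lemma wo_card (K : Type) : exists lt : K -> K -> Prop, well_founded lt /\
  (forall u v, lt u v \/ u = v \/ lt v u) /\ (forall u v w, lt u v -> lt v w -> lt u w) /\
  (forall u, ~ lt u u) /\ (forall g, ~ le_card K {d | lt d g}).
Proof.
  destruct (WO.wo_prop K) as [lt [wf [tot [tr irr]]]].
  destruct (classic (exists a, le_card K {d | lt d a})) as [[a Ha]|no].
  - destruct (wf_min lt (fun a => le_card K {d | lt d a}) wf a Ha) as [a0 [[g Hg] mn]].
    set (f := fun u => proj1_sig (g u)).
    assert (finj : forall u v, f u = f v -> u = v) by (intros u v E; apply Hg; apply sig_eq; exact E).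
    exists (fun u v => lt (f u) (f v)). split; [|split; [|split; [|split]]].
    + apply wf_inverse_image; exact wf.
    + intros u v. destruct (tot (f u) (f v)) as [h|[h|h]]; auto.
    + intros u v w h1 h2; eauto.
    + intros u; apply irr.
    + intros v [h Hh]. apply (mn (f v) (proj2_sig (g v))).
      exists (fun k => exist (fun d => lt d (f v)) (f (proj1_sig (h k))) (proj2_sig (h k))).
      intros u w E. apply (f_equal (@proj1_sig _ _)) in E. simpl in E.
      apply finj in E. apply Hh. apply sig_eq. exact E.
  - exists lt. split; [|split; [|split; [|split]]]; auto. intros g h; apply no; eauto.
Qed.

Lemma list_inj X : le_card nat X -> le_card (list X) X.
Proof.
  intros HX. pose proof HX as [e He]. destruct (hess X HX) as [p Hp].
  set (fold := fix fold (l : list X) := match l with nil => e 0 | a :: l' => p (a, fold l') end).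
  assert (fi : forall l l', length l = length l' -> fold l = fold l' -> l = l').
  { induction l as [|a l IH]; intros [|a' l'] hl E; simpl in *; try discriminate; auto.
    apply Hp in E. inversion E; subst. f_equal. apply IH; auto. }
  exists (fun l => p (e (length l), fold l)).
  intros u v E. apply Hp in E. inversion E as [[E1 E2]]. apply He in E1. auto.
Qed.

Lemma nat_inf : le_card nat nat.
Proof. apply le_card_refl. Qed.

Require Import Defs.
From Stdlib Require Import Reals QArith Qreals.
From Stdlib Require Import Classical ClassicalEpsilon FunctionalExtensionality PropExtensionality.
From Stdlib Require Import Arith Lia List Cantor Wellfounded.
Open Scope R_scope.

Definition ideal_props (Id : pset -> Prop) (n : nat) : Prop :=
  (forall A B : pset, (forall x, A x -> B x) -> Id B -> Id A) /\
  (forall v, Rn n v -> Id (fun y => y = v)) /\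
  (forall F : nat -> pset, (forall k, Id (F k)) -> Id (fun y => exists k, F k y)) /\
  (forall B h r, Id B -> r <> 0 -> Id (fun y => Rn n y /\ B (fun i => r * y i + h i))) /\
  ~ Id (Rn n).

Lemma le_card_map_list A B : le_card A B -> le_card (list A) (list B).
Proof.
  intros [f Hf]. exists (map f). induction u as [|a u IH]; intros [|b v] E; simpl in *; try discriminate; auto.
  inversion E. f_equal; auto.
Qed.

Lemma cnt_prod A B : le_card A nat -> le_card B nat -> le_card (A * B) nat.
Proof.
  intros [f Hf] [g Hg]. exists (fun p => Cantor.to_nat (f (fst p), g (snd p))).
  intros [a b] [a' b'] E. apply Cantor.to_nat_inj in E. inversion E. f_equal; auto.
Qed.

Lemma cnt_list A : le_card A nat -> le_card (list A) nat.
Proof. intros h. eapply le_card_trans. apply le_card_map_list, h. apply list_inj, le_card_refl. Qed.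

Lemma cnt_bool : le_card bool nat.
Proof. exists (fun b : bool => if b then 1%nat else 0%nat). intros [|] [|] E; auto; discriminate. Qed.

Definition zenc (z : Z) : nat := match z with Z0 => 0%nat | Zpos p => (2 * Pos.to_nat p)%nat
  | Zneg p => (2 * Pos.to_nat p + 1)%nat end.
Lemma zenc_inj : forall u v, zenc u = zenc v -> u = v.
Proof.
  intros [|p|p] [|q|q]; simpl; intros E; try lia; f_equal; apply Pos2Nat.inj; lia.
Qed.

Lemma cnt_Q : le_card Q nat.
Proof.
  exists (fun q => Cantor.to_nat (zenc (Qnum q), Pos.to_nat (Qden q))).
  intros [a b] [c d] E. apply Cantor.to_nat_inj in E. inversion E as [[E1 E2]].
  apply zenc_inj in E1. apply Pos2Nat.inj in E2. subst; auto.
Qed.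

Section Comb.
Variable n : nat.
Variable I : ideal_kind.
Variable K : Type.
Hypothesis IP : ideal_props (in_ideal I n) n.
Hypothesis cov : cov_is I n K.

Let Id := in_ideal I n.

Lemma Isub : forall A B : pset, (forall x, A x -> B x) -> Id B -> Id A.
Proof. exact (proj1 IP). Qed.
Lemma Ising : forall v, Rn n v -> Id (fun y => y = v).
Proof. exact (proj1 (proj2 IP)). Qed.
Lemma Icu : forall F : nat -> pset, (forall k, Id (F k)) -> Id (fun y => exists k, F k y).
Proof. exact (proj1 (proj2 (proj2 IP))). Qed.
Lemma Iaff : forall B h r, Id B -> r <> 0 -> Id (fun y => Rn n y /\ B (fun i => r * y i + h i)).
Proof. exact (proj1 (proj2 (proj2 (proj2 IP)))). Qed.
Lemma Inot : ~ Id (Rn n).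
Proof. exact (proj2 (proj2 (proj2 (proj2 IP)))). Qed.

Lemma Iempty : Id (fun _ => False).
Proof. apply (Isub _ (fun y => y = (fun _ => 0))). tauto. apply Ising. intros i _; auto. Qed.

Lemma Ione {C} (F : C -> pset) (P : C -> Prop) : (forall c, Id (F c)) -> (forall c c', P c -> P c' -> c = c') ->
  Id (fun y => exists c, P c /\ F c y).
Proof.
  intros HF Hu. destruct (classic (exists c, P c)) as [[c Pc]|no].
  - apply (Isub _ (F c)); [|auto]. intros y [c' [Pc' Fy]]. rewrite (Hu c c' Pc Pc'); auto.
  - apply (Isub _ (fun _ => False)); [|apply Iempty]. intros y [c [Pc _]]; apply no; eauto.
Qed.

Lemma Icnt {C} (F : C -> pset) : le_card C nat -> (forall c, Id (F c)) -> Id (fun y => exists c, F c y).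
Proof.
  intros [e He] HF.
  apply (Isub _ (fun y => exists k, (fun k y => exists c, e c = k /\ F c y) k y)).
  - intros y [c Fy]. exists (e c), c; auto.
  - apply Icu. intros k. apply Ione; auto. intros c c' E1 E2. apply He; congruence.
Qed.

Definition SMALL (T : Type) := forall F : T -> pset, (forall t, Id (F t)) ->
  exists y, Rn n y /\ forall t, ~ F t y.

Lemma small_of_not_le T : ~ le_card K T -> SMALL T.
Proof.
  intros nle F HF. apply NNPP; intro no. apply nle. apply (proj2 cov T F HF).
  intros x Hx. apply NNPP; intro nx. apply no. exists x; split; auto. intros t Ft. apply nx; eauto.
Qed.

Lemma small_inj T' T : le_card T' T -> SMALL T -> SMALL T'.
Proof.
  intros [f Hf] HT F HF.
  destruct (HT (fun t y => exists t', f t' = t /\ F t' y)) as [y [Ry Hy]].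
  - intros t. apply Ione; auto. intros c c' E1 E2. apply Hf; congruence.
  - exists y; split; auto. intros t' Ft'. apply (Hy (f t')). exists t'; auto.
Qed.

Lemma small_prod T C : SMALL T -> le_card C nat -> SMALL (T * C).
Proof.
  intros HT HC F HF.
  destruct (HT (fun t y => exists c, F (t,c) y)) as [y [Ry Hy]].
  - intros t. apply (Icnt (fun c => F (t,c))); auto.
  - exists y; split; auto. intros [t c] Ft. apply (Hy t). exists c; auto.
Qed.

Lemma small_unit : SMALL unit.
Proof.
  intros F HF. apply NNPP; intro no. apply Inot. apply (Isub _ (F tt)); auto.
  intros x Hx. apply NNPP; intro nx. apply no. exists x; split; auto. intros [] Ft; auto.
Qed.

Lemma small_nat : SMALL nat.
Proof.
  apply (small_inj nat (unit * nat)).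
  - exists (fun k => (tt, k)). intros u v E; inversion E; auto.
  - apply small_prod. apply small_unit. apply le_card_refl.
Qed.

Lemma not_small_K : ~ SMALL K.
Proof.
  intros S. destruct (proj1 cov) as [F [HF Hc]]. destruct (S F HF) as [y [Ry Hy]].
  destruct (Hc y Ry) as [k Fk]. apply (Hy k Fk).
Qed.

Lemma K_unc : ~ le_card K nat.
Proof. intros h. apply not_small_K. eapply small_inj; eauto. apply small_nat. Qed.


Section Order.
Variable lt : K -> K -> Prop.
Hypothesis wf : well_founded lt.
Hypothesis tot : forall u v, lt u v \/ u = v \/ lt v u.
Hypothesis ltr : forall u v w, lt u v -> lt v w -> lt u w.
Hypothesis irr : forall u, ~ lt u u.
Hypothesis segs : forall g, ~ le_card K {d | lt d g}.
Variable B : K -> pset.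
Hypothesis Bid : forall k, Id (B k).

Definition seg g := {d | lt d g}.

Lemma small_seg_list g : SMALL (list (seg g)).
Proof.
  destruct (le_card_comp nat (seg g)) as [h|h].
  - apply (small_inj _ (seg g)). apply list_inj, h. apply small_of_not_le, segs.
  - apply (small_inj _ nat). apply cnt_list, h. apply small_nat.
Qed.

Definition V := (nat -> R).
Definition zero : V := fun _ => 0.
Fixpoint lincomb (x : K -> V) (l : list (K * Q)) : V :=
  match l with nil => zero | p :: l' => fun i => Q2R (snd p) * x (fst p) i + lincomb x l' i end.

Definition hval g (x : K -> V) (ks : list (seg g)) (qs : list Q) : V :=
  lincomb x (combine (map (@proj1_sig _ _) ks) qs).

Definition CT := ((list Q * Q) * bool)%type.
Definition Tg g := (list (seg g) * CT)%type.

Definition Fam g (x : K -> V) (t : Tg g) : pset :=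
  match t with (ks, ((qs, q), flag)) =>
    if flag then match ks with nil => fun _ => False
         | b :: ks' => fun y => Q2R q <> 0 /\ Rn n y /\ B (proj1_sig b) (fun i => Q2R q * y i + hval g x ks' qs i) end
    else fun y => Rn n y /\ y = hval g x ks qs end.

Lemma Fam_id g x t : Id (Fam g x t).
Proof.
  destruct t as [ks [[qs q] [|]]]; simpl.
  - destruct ks as [|b ks'].
    + apply Iempty.
    + destruct (Req_dec (Q2R q) 0) as [e|ne].
      * apply (Isub _ (fun _ => False)); [tauto|apply Iempty].
      * apply (Isub _ (fun y => Rn n y /\ B (proj1_sig b) (fun i => Q2R q * y i + hval g x ks' qs i))).
        -- tauto.
        -- apply Iaff; auto.
  - destruct (classic (Rn n (hval g x ks qs))) as [h|h].
    + apply (Isub _ (fun y => y = hval g x ks qs)); [tauto|]. apply Ising; auto.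
    + apply (Isub _ (fun _ => False)); [|apply Iempty]. intros y [r e]; subst; auto.
Qed.

Lemma cnt_CT : le_card CT nat.
Proof. apply cnt_prod; [apply cnt_prod; [apply cnt_list, cnt_Q | apply cnt_Q] | apply cnt_bool]. Qed.

Lemma small_Tg g : SMALL (Tg g).
Proof. apply small_prod. apply small_seg_list. apply cnt_CT. Qed.

Definition restr g (rec : forall d, lt d g -> V) : K -> V := fun d =>
  match excluded_middle_informative (lt d g) with left h => rec d h | right _ => zero end.
Definition step g (rec : forall d, lt d g -> V) : V :=
  epsilon (inhabits zero) (fun y => Rn n y /\ forall t : Tg g, ~ Fam g (restr g rec) t y).
Definition xs : K -> V := Fix wf (fun _ => V) step.

Lemma xs_eq g : xs g = step g (fun d _ => xs d).
Proof.
  unfold xs. refine (Fix_eq wf (fun _ => V) step _ g). intros g' f1 f2 E. unfold step.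
  assert (restr g' f1 = restr g' f2) as ->; auto.
  apply functional_extensionality; intros d; unfold restr.
  destruct (excluded_middle_informative (lt d g')); auto.
Qed.

Lemma hval_restr g rec ks qs : (forall d h, rec d h = xs d) ->
  hval g (restr g rec) ks qs = hval g xs ks qs.
Proof.
  intros E. unfold hval. revert qs. induction ks as [|k ks IH]; intros [|q qs]; simpl; auto.
  rewrite IH. unfold restr. destruct (excluded_middle_informative (lt (proj1_sig k) g)) as [h|h].
  - rewrite E; auto.
  - exfalso; apply h, (proj2_sig k).
Qed.

Lemma xs_spec g : Rn n (xs g) /\ forall t : Tg g, ~ Fam g xs t (xs g).
Proof.
  assert (Fr : forall t, Fam g (restr g (fun d _ => xs d)) t = Fam g xs t).
  { intros [ks [[qs q] [|]]]; simpl.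
    - destruct ks as [|b ks']; auto. rewrite hval_restr; auto.
    - rewrite hval_restr; auto. }
  assert (ex : exists y, Rn n y /\ forall t : Tg g, ~ Fam g (restr g (fun d _ => xs d)) t y).
  { apply small_Tg. intros t; apply Fam_id. }
  pose proof (epsilon_spec (inhabits zero) _ ex) as sp.
  assert (xe : xs g = epsilon (inhabits zero) (fun y => Rn n y /\ forall t : Tg g, ~ Fam g (restr g (fun d _ => xs d)) t y))
    by (rewrite xs_eq; reflexivity).
  rewrite <- xe in sp. destruct sp as [r sp]. split; auto. intros t; rewrite <- Fr; auto.
Qed.

Lemma rep g (l : list (K * Q)) : (forall p, In p l -> lt (fst p) g) ->
  exists (ks : list (seg g)) qs, combine (map (@proj1_sig _ _) ks) qs = l.
Proof.
  induction l as [|[k q] l IH]; intros H.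
  - exists nil, nil; auto.
  - destruct IH as [ks [qs E]]. { intros p hp; apply H; simpl; auto. }
    assert (hk : lt k g) by (apply (H (k,q)); simpl; auto).
    exists (exist _ k hk :: ks), (q :: qs). simpl. rewrite E. auto.
Qed.

Lemma P2 b g : lt b g -> forall l, (forall p, In p l -> lt (fst p) g) -> forall q, Q2R q <> 0 ->
  ~ B b (fun i => Q2R q * xs g i + lincomb xs l i).
Proof.
  intros hb l hl q hq HB. destruct (rep g l hl) as [ks [qs E]].
  apply ((proj2 (xs_spec g)) (exist _ b hb :: ks, ((qs, q), true))). simpl.
  unfold hval. rewrite E. split; auto. split; auto. apply xs_spec.
Qed.

Lemma P3 g l : (forall p, In p l -> lt (fst p) g) -> xs g <> lincomb xs l.
Proof.
  intros hl E. destruct (rep g l hl) as [ks [qs E']].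
  apply ((proj2 (xs_spec g)) (ks, ((qs, 0%Q), false))). simpl.
  unfold hval. rewrite E'. split; auto. apply xs_spec.
Qed.

Lemma Q2R0 : Q2R 0 = 0.
Proof. unfold Q2R; simpl; field. Qed.
Lemma Q2R1 : Q2R 1 = 1.
Proof. unfold Q2R; simpl; field. Qed.

Lemma lincomb_Rn x : (forall k, Rn n (x k)) -> forall l, Rn n (lincomb x l).
Proof.
  intros hx l i hi. induction l as [|p l IH]; simpl; auto.
  rewrite IH, (hx (fst p) i hi). ring.
Qed.

Lemma lincomb_app x l1 l2 i : lincomb x (l1 ++ l2) i = lincomb x l1 i + lincomb x l2 i.
Proof. induction l1 as [|p l IH]; simpl; [unfold zero|rewrite IH]; ring. Qed.

Lemma lincomb_scal x q l i :
  lincomb x (map (fun p => (fst p, (q * snd p)%Q)) l) i = Q2R q * lincomb x l i.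
Proof. induction l as [|p l IH]; simpl; [unfold zero; ring|]. rewrite IH, Q2R_mult. ring. Qed.

Lemma decomp x g l : exists l' q, (forall p, In p l' -> In p l /\ fst p <> g) /\
  forall i, lincomb x l i = Q2R q * x g i + lincomb x l' i.
Proof.
  induction l as [|p l IH].
  - exists nil, 0%Q. split; [simpl; tauto|]. intros i; simpl; unfold zero; rewrite Q2R0; ring.
  - destruct IH as [l' [q [h1 h2]]].
    destruct (classic (fst p = g)) as [e|ne].
    + exists l', (snd p + q)%Q. split.
      * intros p' hp'. destruct (h1 p' hp'); simpl; auto.
      * intros i. simpl. rewrite h2, Q2R_plus, e. ring.
    + exists (p :: l'), q. split.
      * intros p' [e|hp']; [subst; simpl; auto|]. destruct (h1 p' hp'); simpl; auto.
      * intros i. simpl. rewrite h2. ring.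
Qed.

Lemma maxl (l : list (K * Q)) : l <> nil -> exists m, (exists p, In p l /\ fst p = m) /\
  forall p, In p l -> fst p = m \/ lt (fst p) m.
Proof.
  induction l as [|p l IH]; intros ne; [congruence|].
  destruct l as [|p1 l1].
  - exists (fst p). split; [exists p; simpl; auto|]. intros p' [e|[]]; subst; auto.
  - destruct IH as [m [[p0 [hp0 e0]] hm]]; [discriminate|].
    destruct (tot (fst p) m) as [h|[h|h]].
    + exists m. split; [exists p0; simpl; auto|]. intros p' [e|hp']; [subst; auto|auto].
    + exists m. split; [exists p0; simpl; auto|]. intros p' [e|hp']; [subst; auto|auto].
    + exists (fst p). split; [exists p; simpl; auto|]. intros p' [e|hp']; [subst; auto|].
      right. destruct (hm p' hp') as [e|e]; [rewrite e; auto|eauto].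
Qed.

Definition le' u v := u = v \/ lt u v.
Definition Hs : pset := fun y => exists l, y = lincomb xs l.
Definition Span_le b (y : V) := exists l, (forall p, In p l -> le' (fst p) b) /\ y = lincomb xs l.

Lemma Cg b g : forall l, (forall p, In p l -> le' (fst p) g) -> B b (lincomb xs l) ->
  Span_le b (lincomb xs l).
Proof.
  induction g as [g IH] using (well_founded_ind wf). intros l hl hB.
  destruct (tot g b) as [h|[h|h]].
  - exists l; split; auto. intros p hp. destruct (hl p hp) as [e|e]; right; [rewrite e; auto|eauto].
  - subst; exists l; auto.
  - destruct (decomp xs g l) as [l' [q [h1 h2]]].
    assert (hlt : forall p, In p l' -> lt (fst p) g).
    { intros p hp. destruct (h1 p hp) as [hp' ne]. destruct (hl p hp') as [e|e]; auto; contradiction. }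
    assert (E : lincomb xs l = fun i => Q2R q * xs g i + lincomb xs l' i)
      by (apply functional_extensionality; auto).
    destruct (Req_dec (Q2R q) 0) as [z|nz].
    + assert (E' : lincomb xs l = lincomb xs l').
      { rewrite E. apply functional_extensionality; intros i. rewrite z; ring. }
      rewrite E' in hB |- *.
      destruct l' as [|p0 l0].
      * exists nil; split; [simpl; tauto|reflexivity].
      * destruct (maxl (p0 :: l0)) as [m [[p1 [hp1 e1]] hm]]; [discriminate|].
        apply (IH m); [rewrite <- e1; apply hlt; auto| |auto].
        intros p hp; destruct (hm p hp); [left|right]; auto.
    + exfalso. apply (P2 b g h l' hlt q nz). rewrite <- E. auto.
Qed.

Lemma Cl b y : Hs y -> B b y -> Span_le b y.
Proof.
  intros [l ->] hB. destruct l as [|p0 l0].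
  - exists nil. simpl. split; [tauto|reflexivity].
  - destruct (maxl (p0 :: l0)) as [m [_ hm]]; [discriminate|].
    apply (Cg b m); auto.
Qed.

Lemma span_rep b y : Span_le b y -> exists (ks : list (seg b)) qs q0,
  y = fun i => Q2R q0 * xs b i + hval b xs ks qs i.
Proof.
  intros [l [hl ->]]. destruct (decomp xs b l) as [l' [q [h1 h2]]].
  destruct (rep b l') as [ks [qs E]].
  { intros p hp. destruct (h1 p hp) as [hp' ne]. destruct (hl p hp') as [e|e]; auto; contradiction. }
  exists ks, qs, q. apply functional_extensionality; intros i. rewrite h2. unfold hval; rewrite E; auto.
Qed.

Lemma lc1 k : xs k = lincomb xs ((k, 1%Q) :: nil).
Proof. apply functional_extensionality; intros i; simpl. unfold zero; rewrite Q2R1; ring. Qed.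

Lemma luzin_H (Bcof : forall A, Id A -> exists k, forall x, A x -> B k x) :
  Q_subspace n Hs /\ Luzin I n K Hs.
Proof.
  assert (xRn : forall k, Rn n (xs k)) by (intros k; apply xs_spec).
  split; [split; [|split; [|split]]|split; [|split]].
  - intros y [l ->]. apply lincomb_Rn; auto.
  - exists nil; reflexivity.
  - intros y z [l1 ->] [l2 ->]. exists (l1 ++ l2). apply functional_extensionality; intros i.
    rewrite lincomb_app; auto.
  - intros q y [l ->]. exists (map (fun p => (fst p, (q * snd p)%Q)) l).
    apply functional_extensionality; intros i. rewrite lincomb_scal; auto.
  - intros y [l ->]. apply lincomb_Rn; auto.
  - exists (fun k => exist Hs (xs k) (ex_intro _ _ (lc1 k))).
    intros u v E. apply (f_equal (@proj1_sig _ _)) in E. simpl in E.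
    destruct (tot u v) as [h|[h|h]]; auto.
    + exfalso. apply (P3 v ((u,1%Q)::nil)).
      * intros p [e|[]]; subst; simpl; auto.
      * rewrite <- lc1; auto.
    + exfalso. apply (P3 u ((v,1%Q)::nil)).
      * intros p [e|[]]; subst; simpl; auto.
      * rewrite <- lc1; auto.
  - intros B' hB'. destruct (Bcof B' hB') as [b hb].
    set (Z := {y | Hs y /\ B' y}).
    assert (SZ : SMALL Z).
    { apply (small_inj Z (Tg b)); [|apply small_Tg].
      set (inh := inhabits ((nil, ((nil, 0%Q), true)) : Tg b)).
      set (Pz := fun (z : Z) (t : Tg b) => match t with (ks, ((qs, q0), _)) =>
                   proj1_sig z = fun i => Q2R q0 * xs b i + hval b xs ks qs i end).
      assert (ex : forall z, exists t, Pz z t).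
      { intros [y [hy hy']]. destruct (span_rep b y (Cl b y hy (hb y hy'))) as [ks [qs [q0 e]]].
        exists (ks, ((qs, q0), true)). simpl. auto. }
      exists (fun z => epsilon inh (Pz z)).
      intros u v E. pose proof (epsilon_spec inh _ (ex u)) as su. pose proof (epsilon_spec inh _ (ex v)) as sv.
      rewrite E in su. apply sig_eq. destruct (epsilon inh (Pz v)) as [ks [[qs q0] fl]]. simpl in su, sv.
      rewrite su, sv; auto. }
    split.
    + destruct (le_card_comp Z K) as [h|h]; auto. exfalso. apply not_small_K. apply (small_inj K Z h SZ).
    + intros h. apply not_small_K. apply (small_inj K Z h SZ).
Qed.

End Order.

Lemma main_comb (cof : cof_is I n K) : exists H : pset, Q_subspace n H /\ Luzin I n K H.
Proof.
  destruct (wo_card K) as [lt [wf [tot [tr [irr segs]]]]].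
  destruct (proj1 cof) as [B [Bid Bcof]].
  eexists. apply (luzin_H lt wf tot tr segs B Bid Bcof).
Qed.

End Comb.

Lemma ideal_props_all n I : (1 <= n)%nat -> ideal_props (in_ideal I n) n.
Proof.
  intros hn. destruct I; simpl.
  - split; [apply null_sub|]. split; [intros v hv; apply null_single; auto|].
    split; [apply null_cu|]. split; [intros B h r hB hr; apply null_aff; auto|].
    apply not_null; auto.
  - split; [apply meager_sub|]. split; [intros v hv; apply meager_single; auto|].
    split; [apply meager_cu|]. split; [intros B h r hB hr; apply meager_aff; auto|].
    apply not_meager.
Qed.

Theorem theorem2p5 (n : nat) (I : ideal_kind) (K : Type) :
  (1 <= n)%nat -> cov_is I n K -> cof_is I n K ->
  exists H : pset, Q_subspace n H /\ Luzin I n K H.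
Proof.
  intros hn hcov hcof. apply main_comb; auto. apply ideal_props_all; auto.
Qed.
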